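(* Assume (C1)–(C4). Define the set-valued map $G$ on $[0,1]\times\mathbb R^n$ by $$G(t,y)=\left\{\left(\frac{\rho}{L(t,y,w)+\beta},\;\frac{\rho\, g(t,y)w}{L(t,y,w)+\beta}\right)\in\mathbb R\times\mathbb R^n:\ w\in\mathbb R^m,\ \rho\in[0,1]\right\}.$$ Then $G(t,y)$ is a nonempty convex compact set for every $(t,y)$, and $G$ is Lipschitz continuous (with respect to the Hausdorff distance) on $\Omega$.
   Context: Let $n,m\ge1$; $|\cdot|$ denotes the Euclidean norm (operator norm for matrices) and $B_n$ the closed unit ball of $\mathbb R^n$. Let $L:[0,1]\times\mathbb R^n\times\mathbb R^m\to\mathbb R$ and $g:[0,1]\times\mathbb R^n\to\mathbb R^{n\times m}$ be continuously differentiable. (C1) there is a function $\theta:[0,\infty)\to\mathbb R$ with $L(t,x,u)\ge\theta(|u|)>0$ for all $t,x,u$ and $\lim_{r\to\infty}r/\theta(r)=0$; (C2) there is $\mu>0$ with $L(t,x,u)+\langle\nabla_uL(t,x,u),v-u\rangle+\frac{\mu}{2}|v-u|^2\le L(t,x,v)$ for all $t,x,u,v$; (C3) there are constants $\xi>0,\delta>0$ with $|\nabla_{(t,x)}L(t,x,u)|\,|g(t,x)u|\le\xi L(t,x,u)+\delta$ for all $t,x,u$; (C4) there are constants $c_g>0$, $c_{\nabla g}>0$ with $|g(t,x)|\le c_g$ and $|\nabla_{(t,x)}g(t,x)|\le c_{\nabla g}$ for all $t,x$. Constants: fix $r_0>0$ such that $\theta(r)\ge r$ for all $r\ge r_0$;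 $c=r_0+\int_0^1L(t,0,0)\,dt$; $\Omega=[0,1]\times c_g c\,B_n$; $\sigma(r)=\max_{(t,x)\in\Omega,\,|u|\le r}\big(\langle\nabla_uL(t,x,u),u\rangle-L(t,x,u)\big)$; fix $T_0\in(0,1)$ such that $\beta:=\sigma((c+1)/T_0)>\delta/\xi$. *)

(* Defs.v *)
From Stdlib Require Import Reals.
From mathcomp Require Import all_boot.
Set Implicit Arguments.
Unset Strict Implicit.
Unset Printing Implicit Defensive.
Open Scope R_scope.

Definition vec (n : nat) := 'I_n -> R.
Definition mat (n m : nat) := 'I_n -> 'I_m -> R.

Definition vsum (n : nat) (f : 'I_n -> R) : R := \big[Rplus/0]_(i < n) f i.
Definition dot (n : nat) (u v : vec n) : R := vsum (fun i => u i * v i).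
Definition vnorm (n : nat) (u : vec n) : R := sqrt (dot u u).
Definition vzero (n : nat) : vec n := fun _ => 0.
Definition vsub (n : nat) (u v : vec n) : vec n := fun i => u i - v i.
Definition mulmv (n m : nat) (A : mat n m) (w : vec m) : vec n :=
  fun i => vsum (fun j => A i j * w j).
Definition msub (n m : nat) (A B : mat n m) : mat n m := fun i j => A i j - B i j.
(* Frobenius norm (used only for differentiability/continuity of g, where
   the choice of norm is immaterial) *)
Definition mfrob (n m : nat) (A : mat n m) : R :=
  sqrt (vsum (fun i => vsum (fun j => A i j * A i j))).
(* operator norm bound:  |A| <= K  (|A| = sup_{|w|<=1} |A w|), unfolded *)
Definition opnorm_le (n m : nat) (A : mat n m) (K : R) : Prop :=
  forall w : vec m, vnorm (mulmv A w) <= K * vnorm w.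

Definition dist3 (n m : nat) (t : R) (x : vec n) (u : vec m)
  (s : R) (y : vec n) (v : vec m) : R :=
  sqrt ((s - t) * (s - t) + dot (vsub y x) (vsub y x) + dot (vsub v u) (vsub v u)).
Definition dist2 (n : nat) (t : R) (x : vec n) (s : R) (y : vec n) : R :=
  sqrt ((s - t) * (s - t) + dot (vsub y x) (vsub y x)).

Definition in01 (t : R) : Prop := 0 <= t <= 1.

Definition L_frechet (n m : nat) (L : R -> vec n -> vec m -> R)
  (Lt : R -> vec n -> vec m -> R) (Lx : R -> vec n -> vec m -> vec n)
  (Lu : R -> vec n -> vec m -> vec m) (t : R) (x : vec n) (u : vec m) : Prop :=
  forall eps, 0 < eps -> exists d, 0 < d /\
    forall s y v, dist3 t x u s y v < d ->
      Rabs (L s y v - L t x u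
            - (Lt t x u * (s - t) + dot (Lx t x u) (vsub y x) + dot (Lu t x u) (vsub v u)))
      <= eps * dist3 t x u s y v.

Definition cont3 (n m k : nat) (F : R -> vec n -> vec m -> vec k) : Prop :=
  forall t x u, in01 t -> forall eps, 0 < eps -> exists d, 0 < d /\
    forall s y v, in01 s -> dist3 t x u s y v < d ->
      vnorm (vsub (F s y v) (F t x u)) < eps.
Definition cont3R (n m : nat) (F : R -> vec n -> vec m -> R) : Prop :=
  forall t x u, in01 t -> forall eps, 0 < eps -> exists d, 0 < d /\
    forall s y v, in01 s -> dist3 t x u s y v < d -> Rabs (F s y v - F t x u) < eps.

Definition L_C1 (n m : nat) (L : R -> vec n -> vec m -> R)
  (Lt : R -> vec n -> vec m -> R) (Lx : R -> vec n -> vec m -> vec n)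
  (Lu : R -> vec n -> vec m -> vec m) : Prop :=
  (forall t x u, in01 t -> L_frechet L Lt Lx Lu t x u) /\
  cont3R Lt /\ cont3 Lx /\ cont3 Lu.

Definition Dg (n m : nat) (gt : R -> vec n -> mat n m)
  (gx : R -> vec n -> 'I_n -> mat n m) (t : R) (x : vec n) (ht : R) (hx : vec n)
  : mat n m :=
  fun i j => ht * gt t x i j + vsum (fun k => hx k * gx t x k i j).

Definition g_C1 (n m : nat) (g : R -> vec n -> mat n m)
  (gt : R -> vec n -> mat n m) (gx : R -> vec n -> 'I_n -> mat n m) : Prop :=
  (forall t x, in01 t -> forall eps, 0 < eps -> exists d, 0 < d /\
     forall s y, dist2 t x s y < d ->
       mfrob (msub (msub (g s y) (g t x)) (Dg gt gx t x (s - t) (vsub y x)))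
       <= eps * dist2 t x s y) /\
  (forall t x, in01 t -> forall eps, 0 < eps -> exists d, 0 < d /\
     forall s y, in01 s -> dist2 t x s y < d ->
       mfrob (msub (gt s y) (gt t x)) < eps /\
       forall k, mfrob (msub (gx s y k) (gx t x k)) < eps).

Definition pt (n : nat) := (R * vec n)%type.
Definition pdist (n : nat) (p q : pt n) : R := dist2 p.1 p.2 q.1 q.2.

Definition open_set (n : nat) (U : pt n -> Prop) : Prop :=
  forall p, U p -> exists e, 0 < e /\ forall q, pdist p q < e -> U q.

Definition compact_set (n : nat) (K : pt n -> Prop) : Prop :=
  forall (I : Type) (U : I -> pt n -> Prop),
    (forall i, open_set (U i)) ->
    (forall p, K p -> exists i, U i p) ->
    exists l : list I, forall p, K p -> exists i, List.In i l /\ U i p.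

Definition convex_set (n : nat) (K : pt n -> Prop) : Prop :=
  forall p q lam, K p -> K q -> 0 <= lam <= 1 ->
    K (lam * p.1 + (1 - lam) * q.1, fun i => lam * p.2 i + (1 - lam) * q.2 i).

Definition nonempty_set (n : nat) (K : pt n -> Prop) : Prop := exists p, K p.

(* Hausdorff distance d_H(A,B) <= r, i.e.
   sup_{a in A} inf_{b in B} |a-b| <= r  and  sup_{b in B} inf_{a in A} |a-b| <= r *)
Definition hausdorff_le (n : nat) (A B : pt n -> Prop) (r : R) : Prop :=
  (forall a, A a -> forall eps, 0 < eps -> exists b, B b /\ pdist a b < r + eps) /\
  (forall b, B b -> forall eps, 0 < eps -> exists a, A a /\ pdist a b < r + eps).

Definition Gset (n m : nat) (L : R -> vec n -> vec m -> R) (g : R -> vec n -> mat n m)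
  (beta : R) (t : R) (y : vec n) (p : pt n) : Prop :=
  exists (w : vec m) (rho : R), 0 <= rho <= 1 /\
    p.1 = rho / (L t y w + beta) /\
    forall i, p.2 i = rho * mulmv (g t y) w i / (L t y w + beta).

Definition inOmega (n : nat) (cg c : R) (t : R) (y : vec n) : Prop :=
  in01 t /\ vnorm y <= cg * c.

(* Main.v *)
Require Import Defs.
From HB Require Import structures.
From Stdlib Require Import Reals Lra Psatz FunctionalExtensionality ClassicalEpsilon Classical.
From mathcomp Require Import all_boot.
Open Scope R_scope.
Set Implicit Arguments.
Unset Strict Implicit.


HB.instance Definition _ := Monoid.isComLaw.Build R 0 Rplus (fun a b c => esym (Rplus_assoc a b c)) Rplus_comm Rplus_0_l.

Lemma vsum_ext k (f g : 'I_k -> R) : (forall i, f i = g i) -> vsum f = vsum g.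
Proof. move=> H; rewrite /vsum; apply: eq_bigr => i _; exact: H. Qed.

Lemma vsum_add k (f g : 'I_k -> R) : vsum (fun i => f i + g i) = vsum f + vsum g.
Proof. by rewrite /vsum big_split. Qed.

Lemma vsum_scal k c (f : 'I_k -> R) : vsum (fun i => c * f i) = c * vsum f.
Proof.
rewrite /vsum; apply: (big_ind2 (fun a b => a = c * b)); first lra.
- move=> x1 x2 y1 y2 -> ->; lra.
- by [].
Qed.

Lemma vsum_le k (f g : 'I_k -> R) : (forall i, f i <= g i) -> vsum f <= vsum g.
Proof.
move=> H; rewrite /vsum; apply: (big_ind2 (fun a b => a <= b)); first lra.
- move=> x1 x2 y1 y2 ? ?; lra.
- move=> i _; exact: H.
Qed.

Lemma vsum_ge0 k (f : 'I_k -> R) : (forall i, 0 <= f i) -> 0 <= vsum f.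
Proof.
move=> H; rewrite /vsum; apply: (big_ind (fun a => 0 <= a)); first lra.
- move=> x y ? ?; lra.
- move=> i _; exact: H.
Qed.

Lemma vsum_one k (f : 'I_k -> R) i : (forall j, 0 <= f j) -> f i <= vsum f.
Proof.
move=> H; rewrite /vsum (bigD1 i) //=.
have : 0 <= \big[Rplus/0]_(j < k | j != i) f j.
  apply: (big_ind (fun a => 0 <= a)); first lra.
  - move=> x y ? ?; lra.
  - move=> j _; exact: H.
move=> H0. rewrite -{1}(Rplus_0_r (f i)). by apply: Rplus_le_compat_l.
Qed.

Lemma vsum_recl k (f : 'I_k.+1 -> R) : vsum f = f ord0 + vsum (fun i => f (lift ord0 i)).
Proof. by rewrite /vsum big_ord_recl. Qed.

Lemma vsum0 k : vsum (fun _ : 'I_k => 0) = 0.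
Proof. by rewrite /vsum big1. Qed.

Lemma dot_ge0 k (u : vec k) : 0 <= dot u u.
Proof. apply: vsum_ge0 => i; nra. Qed.

Lemma dot_sym k (u v : vec k) : dot u v = dot v u.
Proof. apply: vsum_ext => i; lra. Qed.

Lemma vnorm_ge0 k (u : vec k) : 0 <= vnorm u.
Proof. exact: sqrt_pos. Qed.

Lemma vnorm_sq k (u : vec k) : vnorm u * vnorm u = dot u u.
Proof. apply: sqrt_sqrt; exact: dot_ge0. Qed.

Lemma CS_sq k (u v : vec k) : dot u v * dot u v <= dot u u * dot v v.
Proof.
set a := dot v v; set b := dot u v; set c := dot u u.
have Q : forall l, 0 <= c - 2 * l * b + l * l * a.
  move=> l; have := dot_ge0 (fun i => u i - l * v i).
  have -> : dot (fun i => u i - l * v i) (fun i => u i - l * v i)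
     = vsum (fun i => u i * u i) + (-2 * l) * vsum (fun i => u i * v i) + (l * l) * vsum (fun i => v i * v i).
    rewrite -!vsum_scal -!vsum_add; apply: vsum_ext => i; ring.
  rewrite /a /b /c /dot; lra.
have ha : 0 <= a by apply: dot_ge0.
have hc : 0 <= c by apply: dot_ge0.
destruct (Rle_lt_or_eq_dec 0 a ha) as [Ha|Ha].
- have := Q (b / a). have -> : c - 2 * (b / a) * b + b / a * (b / a) * a = c - b * b / a by field; lra.
  move=> H. have : b * b / a <= c by lra.
  move=> H2. have : b * b <= c * a. { apply (Rmult_le_compat_r a) in H2; last lra. by rewrite /Rdiv Rmult_assoc Rinv_l in H2; lra. }
  lra.
- rewrite -Ha. destruct (Req_dec b 0) as [Hb|Hb]; first (rewrite Hb; nra).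
  have := Q ((c + 1) / (2 * b)). rewrite -Ha.
  have -> : c - 2 * ((c + 1) / (2 * b)) * b + (c + 1) / (2 * b) * ((c + 1) / (2 * b)) * 0 = -1 by field. lra.
Qed.

Lemma CS k (u v : vec k) : Rabs (dot u v) <= vnorm u * vnorm v.
Proof.
rewrite /vnorm -sqrt_mult; try apply: dot_ge0.
rewrite -sqrt_Rsqr_abs; apply: sqrt_le_1_alt. rewrite /Rsqr; exact: CS_sq.
Qed.

Lemma CS' k (u v : vec k) : dot u v <= vnorm u * vnorm v.
Proof. have := CS u v. have := Rle_abs (dot u v). lra. Qed.

Lemma vnorm_le_sq k (u : vec k) r : 0 <= r -> dot u u <= r * r -> vnorm u <= r.
Proof. move=> hr h. rewrite /vnorm -(sqrt_Rsqr r hr). apply: sqrt_le_1_alt. done. Qed.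

Lemma vnorm_add k (u v : vec k) : vnorm (fun i => u i + v i) <= vnorm u + vnorm v.
Proof.
apply: vnorm_le_sq; first (have := vnorm_ge0 u; have := vnorm_ge0 v; lra).
have -> : dot (fun i => u i + v i) (fun i => u i + v i) = dot u u + 2 * dot u v + dot v v.
  rewrite /dot -vsum_scal -!vsum_add; apply: vsum_ext => i; ring.
have := CS' u v. rewrite -(vnorm_sq u) -(vnorm_sq v). nra.
Qed.

Lemma vnorm_scal k c (u : vec k) : vnorm (fun i => c * u i) = Rabs c * vnorm u.
Proof.
rewrite /vnorm. have -> : dot (fun i => c * u i) (fun i => c * u i) = (c * c) * dot u u.
  rewrite /dot -vsum_scal; apply: vsum_ext => i; ring.
rewrite sqrt_mult; [|nra|apply dot_ge0]. by rewrite -(sqrt_Rsqr_abs c).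
Qed.

Lemma vnorm_ext k (u v : vec k) : (forall i, u i = v i) -> vnorm u = vnorm v.
Proof. move=> H; have -> : u = v by apply: functional_extensionality. done. Qed.

Lemma vnorm_opp k (u : vec k) : vnorm (fun i => - u i) = vnorm u.
Proof.
rewrite -(Rmult_1_l (vnorm u)) -Rabs_R1 -Rabs_Ropp -vnorm_scal; apply: vnorm_ext => i; ring.
Qed.

Lemma vnorm_vsub_sym k (u v : vec k) : vnorm (vsub u v) = vnorm (vsub v u).
Proof. rewrite -vnorm_opp; apply: vnorm_ext => i; rewrite /vsub; ring. Qed.

Lemma vnorm_coord k (u : vec k) i : Rabs (u i) <= vnorm u.
Proof.
rewrite -sqrt_Rsqr_abs /vnorm; apply: sqrt_le_1_alt.
rewrite /Rsqr /dot; apply: (@vsum_one _ (fun j => u j * u j) i) => j; nra.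
Qed.

Lemma vnorm_zero k : vnorm (fun _ : 'I_k => 0) = 0.
Proof. rewrite /vnorm /dot /vsum big1; first exact: sqrt_0. move=> i _; ring.
Qed.

Lemma vnorm_sub k (u v : vec k) : vnorm (vsub u v) <= vnorm u + vnorm v.
Proof. have := vnorm_add u (fun i => - v i). rewrite vnorm_opp. by []. Qed.

Lemma vnorm_rev k (u v : vec k) : Rabs (vnorm u - vnorm v) <= vnorm (vsub u v).
Proof.
have h1 := vnorm_add (vsub u v) v.
have h2 := vnorm_add (vsub v u) u.
rewrite (vnorm_ext (u := fun i => vsub u v i + v i) (v := u)) in h1; last by move=> i; rewrite /vsub; ring.
rewrite (vnorm_ext (u := fun i => vsub v u i + u i) (v := v)) in h2; last by move=> i; rewrite /vsub; ring.
rewrite vnorm_vsub_sym in h2. apply: Rabs_le; lra.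
Qed.

Lemma vnorm_tri k (u v w : vec k) : vnorm (vsub u w) <= vnorm (vsub u v) + vnorm (vsub v w).
Proof.
rewrite (vnorm_ext (u := vsub u w) (v := fun i => vsub u v i + vsub v w i)); first exact: vnorm_add.
move=> i; rewrite /vsub; ring.
Qed.

Lemma mulmv_lin n m (A : mat n m) a b (u v : vec m) i :
  mulmv A (fun j => a * u j + b * v j) i = a * mulmv A u i + b * mulmv A v i.
Proof. rewrite /mulmv -!vsum_scal -vsum_add; apply: vsum_ext => j; ring. Qed.

Lemma mulmv_frob n m (A : mat n m) (w : vec m) : vnorm (mulmv A w) <= mfrob A * vnorm w.
Proof.
have h0 : 0 <= mfrob A * vnorm w by apply: Rmult_le_pos; [apply sqrt_pos|apply vnorm_ge0].
apply: vnorm_le_sq => //.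
set F := vsum (fun i => vsum (fun j => A i j * A i j)).
have hF : 0 <= F by apply vsum_ge0 => i; apply vsum_ge0 => j; nra.
have -> : mfrob A * vnorm w * (mfrob A * vnorm w) = F * dot w w.
  rewrite /mfrob -/F. have := vnorm_sq w. have := sqrt_sqrt F hF. nra.
have -> : F * dot w w = vsum (fun i => vsum (fun j => A i j * A i j) * dot w w).
  rewrite /F Rmult_comm -vsum_scal; apply vsum_ext=>i; ring.
apply: vsum_le => i.
have := CS_sq (fun j => A i j) w. rewrite /dot /mulmv. lra.
Qed.

Lemma sqrt_sum_le a b : 0 <= a -> 0 <= b -> sqrt (a + b) <= sqrt a + sqrt b.
Proof.
move=> ha hb. rewrite -(sqrt_Rsqr (sqrt a + sqrt b)); last (have := sqrt_pos a; have := sqrt_pos b; lra).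
apply: sqrt_le_1_alt. rewrite /Rsqr. have := sqrt_sqrt a ha. have := sqrt_sqrt b hb.
have := sqrt_pos a; have := sqrt_pos b. nra.
Qed.

Lemma sqrt_sq2_le a b : sqrt (a * a + b * b) <= Rabs a + Rabs b.
Proof.
have := @sqrt_sum_le (a*a) (b*b). rewrite -!Rsqr_def !sqrt_Rsqr_abs. move=> H; apply: H; apply Rle_0_sqr.
Qed.

Lemma CS2 a b k (u v : vec k) :
  Rabs (a * b + dot u v) <= sqrt (a * a + dot u u) * sqrt (b * b + dot v v).
Proof.
have hu := dot_ge0 u; have hv := dot_ge0 v.
rewrite -sqrt_mult; [|nra|nra].
rewrite -sqrt_Rsqr_abs; apply: sqrt_le_1_alt. rewrite /Rsqr.
have hc := CS_sq u v. have h1 : 0 <= a*a*dot v v + b*b*dot u u by nra. have h3 := Rle_0_sqr (a*a*dot v v - b*b*dot u u). rewrite /Rsqr in h3. have h4 := Rmult_le_compat_l (4*(a*b)*(a*b)) _ _ ltac:(nra) hc. have h2 : (2*a*b*dot u v)*(2*a*b*dot u v) <= (a*a*dot v v + b*b*dot u u)*(a*a*dot v v + b*b*dot u u) by nra. have h5 : 2*a*b*dot u v <= a*a*dot v v + b*b*dot u u by nra. nra.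
Qed.


Definition opn (X : Type) (d : X -> X -> R) (U : X -> Prop) : Prop :=
  forall p, U p -> exists e, 0 < e /\ forall q, d p q < e -> U q.

Definition cpt (X : Type) (d : X -> X -> R) (K : X -> Prop) : Prop :=
  forall (I : Type) (U : I -> X -> Prop),
    (forall i, opn d (U i)) ->
    (forall p, K p -> exists i, U i p) ->
    exists l : list I, forall p, K p -> exists i, List.In i l /\ U i p.

Definition tri (X : Type) (d : X -> X -> R) := forall x y z, d x z <= d x y + d y z.

Definition Rd (x y : R) := Rabs (y - x).

Lemma Rd_tri : tri Rd.
Proof. move=> x y z; rewrite /Rd. have h := Rabs_triang (y - x) (z - y). have e : y - x + (z - y) = z - x by ring. rewrite e in h. lra. Qed.

Lemma cpt_interval a b : cpt Rd (fun x => a <= x <= b).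
Proof.
move=> I U HU Hc.
destruct (Rle_or_lt a b) as [hab|hab]; last first.
  exists nil => p hp; lra.
pose P x := exists l : list I, forall p, a <= p <= x -> exists i, List.In i l /\ U i p.
pose E x := a <= x <= b /\ P x.
have Ea : E a.
  split; first lra. have [i hi] := Hc a ltac:(lra). exists (i :: nil) => p hp.
  have -> : p = a by lra. exists i; split => //; left => //.
have bE : bound E by exists b => x [hx _]; lra.
have [c [cub club]] := completeness E bE (ex_intro _ a Ea).
have hac : a <= c by apply: cub.
have hcb : c <= b by apply: club => x [hx _]; lra.
have [i hi] := Hc c ltac:(lra).
have [e [he Hball]] := HU i c hi.
have [x [[hx1 Px] hxc]] : exists x, E x /\ c - e < x.
  apply: NNPP => Hn.
  have : c <= c - e; last lra.
  apply: club => y Ey. apply: Rnot_lt_le => hy. apply: Hn. by exists y.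
have Py : P (Rmin b (c + e / 2)).
  have [l hl] := Px. exists (i :: l) => p hp.
  destruct (Rle_or_lt p x) as [hpx|hpx].
  - have [j [hj1 hj2]] := hl p ltac:(lra). exists j; split => //; right => //.
  - exists i; split; first (left => //). apply: Hball. rewrite /Rd.
    have hx := cub x (conj hx1 Px).
    have : p <= c + e / 2 by have ? := Rmin_r b (c + e/2); lra.
    move=> h. apply: Rabs_def1; lra.
have Ey : E (Rmin b (c + e / 2)).
  split => //. split; [ |apply: Rmin_l]. apply: Rmin_glb; lra.
have hyc := cub _ Ey.
have hmin : Rmin b (c + e / 2) = b.
  rewrite /Rmin in hyc *; destruct (Rle_dec b (c + e/2)); lra.
rewrite hmin in Py. have [l hl] := Py. exists l => p hp. exact: hl.
Qed.

Definition refl0 (X : Type) (d : X -> X -> R) := forall x, d x x = 0.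

Lemma fold_min_pos (T : Type) (f : T -> R) (l : list T) :
  (forall x, List.In x l -> 0 < f x) -> 0 < List.fold_right Rmin 1 (List.map f l).
Proof.
elim: l => [|x l IH] H /=; first lra.
apply: Rmin_glb_lt; first (apply: H; left => //). apply: IH => y hy; apply: H; right => //.
Qed.

Lemma fold_min_le (T : Type) (f : T -> R) (l : list T) x :
  List.In x l -> List.fold_right Rmin 1 (List.map f l) <= f x.
Proof.
elim: l => [|y l IH] //= [->|h]; first exact: Rmin_l.
apply: Rle_trans (Rmin_r _ _) (IH h).
Qed.

Lemma cpt_prod (X Y : Type) (dX : X -> X -> R) (dY : Y -> Y -> R) (dP : X * Y -> X * Y -> R)
  (A : X -> Prop) (B : Y -> Prop) :
  tri dX -> tri dY -> refl0 dX -> refl0 dY ->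
  (forall p q, dP p q <= dX p.1 q.1 + dY p.2 q.2) ->
  cpt dX A -> cpt dY B -> cpt dP (fun p => A p.1 /\ B p.2).
Proof.
move=> tX tY rX rY hP cA cB I U HU Hc.
have tube : forall a : {a | A a}, exists dl : R * list I, 0 < dl.1 /\
    forall x y, dX (sval a) x < dl.1 -> B y -> exists i, List.In i dl.2 /\ U i (x, y).
  move=> [a ha] /=.
  have hb : forall b : {b | B b}, exists ir : I * R, 0 < ir.2 /\
      forall q, dP (a, sval b) q < ir.2 -> U ir.1 q.
    move=> [b hb]. have [i hi] := Hc (a, b) (conj ha hb).
    have [r [hr H]] := HU i _ hi. by exists (i, r).
  pose ch := fun b => proj1_sig (constructive_indefinite_description _ (hb b)).
  have chP : forall b, 0 < (ch b).2 /\ forall q, dP (a, sval b) q < (ch b).2 -> U (ch b).1 q.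
    move=> b; exact: (proj2_sig (constructive_indefinite_description _ (hb b))).
  pose V (b : {b | B b}) := fun y => dY (sval b) y < (ch b).2 / 2.
  have HV : forall b, opn dY (V b).
    move=> b y hy. exists ((ch b).2 / 2 - dY (sval b) y). split; first (rewrite /V in hy; lra).
    move=> q hq. rewrite /V. have ? := tY (sval b) y q. lra.
  have cov : forall y, B y -> exists b, V b y.
    move=> y hy. exists (exist _ y hy). rewrite /V /= rY. apply: Rdiv_lt_0_compat; [exact: (chP _).1|lra].
  have [lb hlb] := cB _ V HV cov.
  exists (List.fold_right Rmin 1 (List.map (fun b => (ch b).2 / 2) lb), List.map (fun b => (ch b).1) lb).
  split => /=.
    apply: fold_min_pos => b _. have ? := (chP b).1. lra.
  move=> x y hx hy.
  have [b [hbin hVb]] := hlb y hy.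
  exists (ch b).1. split; first by apply: List.in_map.
  apply: (chP b).2. have h1 := hP (a, sval b) (x, y). simpl in h1.
  have h2 := @fold_min_le _ (fun b => (ch b).2 / 2) lb b hbin. simpl in h2. rewrite /V in hVb. simpl in hx. lra.
pose ct := fun a => proj1_sig (constructive_indefinite_description _ (tube a)).
have ctP : forall a, 0 < (ct a).1 /\ forall x y, dX (sval a) x < (ct a).1 -> B y ->
    exists i, List.In i (ct a).2 /\ U i (x, y).
  move=> a; exact: (proj2_sig (constructive_indefinite_description _ (tube a))).
pose T (a : {a | A a}) := fun x => dX (sval a) x < (ct a).1.
have HT : forall a, opn dX (T a).
  move=> a x hx. exists ((ct a).1 - dX (sval a) x). split; first (rewrite /T in hx; lra).
  move=> q hq. rewrite /T. have ? := tX (sval a) x q. lra.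
have covA : forall x, A x -> exists a, T a x.
  move=> x hx. exists (exist _ x hx). rewrite /T /= rX. exact: (ctP _).1.
have [la hla] := cA _ T HT covA.
exists (List.flat_map (fun a => (ct a).2) la) => p [hp1 hp2].
have [a [ha1 ha2]] := hla _ hp1.
have [i [hi1 hi2]] := (ctP a).2 _ _ ha2 hp2.
exists i. split; first by apply/List.in_flat_map; exists a.
by rewrite (surjective_pairing p).
Qed.

Lemma cpt_image (X Y : Type) (dX : X -> X -> R) (dY : Y -> Y -> R) (K : X -> Prop)
  (K' : Y -> Prop) (f : X -> Y) :
  tri dX -> refl0 dX -> cpt dX K ->
  (forall x, K x -> forall e, 0 < e -> exists del, 0 < del /\
       forall x', dX x x' < del -> dY (f x) (f x') < e) ->
  (forall x, K x -> K' (f x)) ->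
  (forall y, K' y -> exists x, K x /\ f x = y) ->
  cpt dY K'.
Proof.
move=> tX rX cK hf hin hs I U HU Hc.
pose V i := fun x => exists del, 0 < del /\ forall x', dX x x' < del -> U i (f x').
have HV : forall i, opn dX (V i).
  move=> i x [del [hd H]]. exists del. split => // q hq.
  exists (del - dX x q). split; first lra. move=> x' hx'. apply: H. have ? := tX x q x'. lra.
have cov : forall x, K x -> exists i, V i x.
  move=> x hx. have [i hi] := Hc _ (hin x hx).
  have [e [he He]] := HU i _ hi.
  have [del [hd Hd]] := hf x hx e he.
  exists i, del. split => // x' hx'. apply: He. exact: Hd.
have [l hl] := cK _ V HV cov.
exists l => y hy. have [x [hx <-]] := hs y hy.
have [i [hi [del [hd H]]]] := hl x hx. exists i. split => //. apply: H. by rewrite rX.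
Qed.

Lemma fold_max_ge (T : Type) (f : T -> R) (l : list T) x :
  List.In x l -> f x <= List.fold_right Rmax 0 (List.map f l).
Proof.
elim: l => [|y l IH] //= [->|h]; first exact: Rmax_l.
apply: Rle_trans (IH h) (Rmax_r _ _).
Qed.

Lemma cpt_bound (X : Type) (dX : X -> X -> R) (K D : X -> Prop) (F : X -> R) :
  tri dX -> refl0 dX -> cpt dX K -> (forall x, K x -> D x) ->
  (forall x, K x -> forall e, 0 < e -> exists del, 0 < del /\
      forall x', D x' -> dX x x' < del -> Rabs (F x' - F x) < e) ->
  exists B, forall x, K x -> F x <= B.
Proof.
move=> tX rX cK hD hF.
pose U (x : X) := fun p => exists e, 0 < e /\ forall q, D q -> dX p q < e -> Rabs (F q - F x) < 1.
have HU : forall x, opn dX (U x).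
  move=> x p [e [he H]]. exists e. split => // q hq.
  exists (e - dX p q). split; first lra. move=> q' hq' hq''. apply: H => //. have ? := tX p q q'. lra.
have cov : forall p, K p -> exists x, U x p.
  move=> p hp. exists p. have [del [hd H]] := hF p hp 1 ltac:(lra). by exists del.
have [l hl] := cK _ U HU cov.
exists (List.fold_right Rmax 0 (List.map (fun x => F x + 1) l)) => p hp.
have [x [hx [e [he H]]]] := hl p hp.
have h1 := H p (hD p hp) ltac:(rewrite rX; lra).
have h2 := @fold_max_ge _ (fun x => F x + 1) l x hx. simpl in h2.
have h3 := Rle_abs (F p - F x). lra.
Qed.

Definition vd k (u v : vec k) := vnorm (vsub v u).
Definition cube k B (u : vec k) := forall i, Rabs (u i) <= B.

Lemma vd_tri k : tri (@vd k).
Proof. move=> x y z; rewrite /vd. have h := vnorm_tri z y x. lra. Qed.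

Lemma vd_refl k : refl0 (@vd k).
Proof. move=> x; rewrite /vd -(vnorm_zero k); apply: vnorm_ext => i; rewrite /vsub; ring. Qed.

Lemma Rd_refl : refl0 Rd.
Proof. move=> x; rewrite /Rd Rminus_diag Rabs_R0 //. Qed.

Definition vcons k (r : R) (u : vec k) : vec k.+1 :=
  fun i => match unlift ord0 i with Some j => u j | None => r end.

Lemma vcons0 k r (u : vec k) : vcons r u ord0 = r.
Proof. by rewrite /vcons unlift_none. Qed.

Lemma vconsS k r (u : vec k) j : vcons r u (lift ord0 j) = u j.
Proof. by rewrite /vcons liftK. Qed.

Lemma dot_vcons k r (u : vec k) : dot (vcons r u) (vcons r u) = r * r + dot u u.
Proof. rewrite /dot vsum_recl vcons0; congr (_ + _); apply: vsum_ext => j; by rewrite vconsS. Qed.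

Lemma vcons_eta k (v : vec k.+1) : vcons (v ord0) (fun j => v (lift ord0 j)) = v.
Proof.
apply: functional_extensionality => i. rewrite /vcons.
by case: unliftP => [j ->|->].
Qed.

Definition pd (X Y : Type) (dX : X -> X -> R) (dY : Y -> Y -> R) (p q : X * Y) :=
  dX p.1 q.1 + dY p.2 q.2.

Lemma pd_tri X Y (dX : X -> X -> R) (dY : Y -> Y -> R) : tri dX -> tri dY -> tri (pd dX dY).
Proof. move=> h1 h2 x y z; rewrite /pd. have ? := h1 x.1 y.1 z.1. have ? := h2 x.2 y.2 z.2. lra. Qed.

Lemma pd_refl X Y (dX : X -> X -> R) (dY : Y -> Y -> R) : refl0 dX -> refl0 dY -> refl0 (pd dX dY).
Proof. move=> h1 h2 x; rewrite /pd h1 h2; ring. Qed.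

Lemma cpt_pd X Y (dX : X -> X -> R) (dY : Y -> Y -> R) A B :
  tri dX -> tri dY -> refl0 dX -> refl0 dY ->
  cpt dX A -> cpt dY B -> cpt (pd dX dY) (fun p => A p.1 /\ B p.2).
Proof. move=> *; apply: cpt_prod => //; move=> p q; rewrite /pd; lra. Qed.

Lemma cpt_cube k B : cpt (@vd k) (cube B).
Proof.
elim: k => [|k IH].
  move=> I U HU Hc. have [i hi] := Hc (fun _ => 0) (fun i => match i with Ordinal _ h => False_ind _ (notF h) end).
  exists (i :: nil) => p hp. exists i; split; first by left.
  have -> : p = (fun _ => 0) by apply: functional_extensionality => [[j hj]].
  done.
apply: (@cpt_image _ _ (pd Rd (@vd k)) _ (fun p => (-B <= p.1 <= B) /\ cube B p.2) _
   (fun p => vcons p.1 p.2)).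
- apply: pd_tri; [exact: Rd_tri|exact: vd_tri].
- apply: pd_refl; [exact: Rd_refl|exact: vd_refl].
- apply: (@cpt_pd _ _ Rd (@vd k) (fun r => -B <= r <= B) (cube B)); [exact: Rd_tri|exact: vd_tri|exact: Rd_refl|exact: vd_refl|exact: cpt_interval|exact: IH].
- move=> [r u] _ e he. exists e; split => // [[r' u']] h.
  rewrite /pd /= in h. rewrite /vd.
  have -> : vsub (vcons r' u') (vcons r u) = vcons (r' - r) (vsub u' u).
    apply: functional_extensionality => i. rewrite /vsub /vcons. by case: unlift.
  rewrite /vnorm dot_vcons. apply: Rle_lt_trans h.
  apply: Rle_trans (sqrt_sum_le _ _) _; [apply: Rle_0_sqr|apply: dot_ge0|].
  rewrite -Rsqr_def sqrt_Rsqr_abs /Rd /vd /vnorm. lra.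
- move=> [r u] [hr hu] i /=. rewrite /vcons. case: unlift => [j|]; first exact: hu.
  simpl in hr. apply: Rabs_le; lra.
- move=> v hv. exists (v ord0, fun j => v (lift ord0 j)). split; last exact: vcons_eta.
  split => /=; last by move=> j; apply: hv.
  have h := hv ord0. have h1 := Rle_abs (v ord0). have h2 := Rabs_Ropp (v ord0). have h3 := Rle_abs (- v ord0). lra.
Qed.


Lemma sqrt_mono a b : 0 <= a -> a <= b -> sqrt a <= sqrt b.
Proof. move=> ha hab; apply: sqrt_le_1_alt => //. Qed.

Lemma sqrt_abs_le a b : 0 <= b -> Rabs a <= sqrt (a * a + b).
Proof. move=> hb. rewrite -sqrt_Rsqr_abs. apply: sqrt_le_1_alt. rewrite /Rsqr. lra. Qed.

Lemma dist3_le n m t (x : vec n) (u : vec m) s y v :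
  dist3 t x u s y v <= Rabs (s - t) + vnorm (vsub y x) + vnorm (vsub v u).
Proof.
rewrite /dist3 /vnorm.
have h1 := dot_ge0 (vsub y x). have h2 := dot_ge0 (vsub v u). have h0 := Rle_0_sqr (s - t). rewrite /Rsqr in h0.
apply: Rle_trans (sqrt_sum_le _ _) _; [nra|done|].
have := sqrt_sum_le h0 h1. rewrite -Rsqr_def sqrt_Rsqr_abs. lra.
Qed.

Lemma dist3_t n m t (x : vec n) (u : vec m) s y v : Rabs (s - t) <= dist3 t x u s y v.
Proof.
rewrite /dist3. have h1 := dot_ge0 (vsub y x). have h2 := dot_ge0 (vsub v u).
rewrite Rplus_assoc. apply: sqrt_abs_le. lra.
Qed.

Lemma dist3_x n m t (x : vec n) (u : vec m) s y v : vnorm (vsub y x) <= dist3 t x u s y v.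
Proof.
rewrite /dist3 /vnorm. have h1 := dot_ge0 (vsub y x). have h2 := dot_ge0 (vsub v u).
have h0 := Rle_0_sqr (s - t). rewrite /Rsqr in h0. apply: sqrt_mono => //; lra.
Qed.

Lemma dist3_u n m t (x : vec n) (u : vec m) s y v : vnorm (vsub v u) <= dist3 t x u s y v.
Proof.
rewrite /dist3 /vnorm. have h1 := dot_ge0 (vsub y x). have h2 := dot_ge0 (vsub v u).
have h0 := Rle_0_sqr (s - t). rewrite /Rsqr in h0. apply: sqrt_mono => //; lra.
Qed.

Lemma dist2_le n t (x : vec n) s y : dist2 t x s y <= Rabs (s - t) + vnorm (vsub y x).
Proof.
rewrite /dist2 /vnorm. have h1 := dot_ge0 (vsub y x). have h0 := Rle_0_sqr (s - t). rewrite /Rsqr in h0.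
have := sqrt_sum_le h0 h1. rewrite -Rsqr_def sqrt_Rsqr_abs. lra.
Qed.

Lemma dist2_t n t (x : vec n) s y : Rabs (s - t) <= dist2 t x s y.
Proof. rewrite /dist2. apply: sqrt_abs_le. exact: dot_ge0. Qed.

Lemma dist2_x n t (x : vec n) s y : vnorm (vsub y x) <= dist2 t x s y.
Proof.
rewrite /dist2 /vnorm. have h1 := dot_ge0 (vsub y x).
have h0 := Rle_0_sqr (s - t). rewrite /Rsqr in h0. apply: sqrt_mono => //; lra.
Qed.

Lemma dist2_ge0 n t (x : vec n) s y : 0 <= dist2 t x s y.
Proof. exact: sqrt_pos. Qed.

Lemma dist2_sym n t (x : vec n) s y : dist2 t x s y = dist2 s y t x.
Proof.
rewrite /dist2. congr sqrt. congr (_ + _); first ring. rewrite /dot; apply: vsum_ext => i; rewrite /vsub; ring.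
Qed.

Lemma L_cont n m (L : R -> vec n -> vec m -> R) Lt Lx Lu t x u :
  L_frechet L Lt Lx Lu t x u ->
  forall e, 0 < e -> exists del, 0 < del /\
    forall s y v, dist3 t x u s y v < del -> Rabs (L s y v - L t x u) < e.
Proof.
move=> Hf e he.
have [d [hd H]] := Hf 1 ltac:(lra).
set C := Rabs (Lt t x u) + vnorm (Lx t x u) + vnorm (Lu t x u) + 1.
have hC : 0 < C by have := Rabs_pos (Lt t x u); have := vnorm_ge0 (Lx t x u); have := vnorm_ge0 (Lu t x u); rewrite /C; lra.
exists (Rmin d (e / C)). split; first by apply: Rmin_pos => //; apply: Rdiv_lt_0_compat.
move=> s y v hdist.
have hd1 : dist3 t x u s y v < d by have := Rmin_l d (e / C); lra.
have hd2 : dist3 t x u s y v < e / C by have := Rmin_r d (e / C); lra.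
have h := H s y v hd1.
have ht := dist3_t t x u s y v. have hx := dist3_x t x u s y v. have hu := dist3_u t x u s y v.
have c1 := CS (Lx t x u) (vsub y x). have c2 := CS (Lu t x u) (vsub v u).
have a1 : Rabs (Lt t x u * (s - t)) <= Rabs (Lt t x u) * dist3 t x u s y v.
  rewrite Rabs_mult; apply: Rmult_le_compat_l => //; exact: Rabs_pos.
have a2 : vnorm (Lx t x u) * vnorm (vsub y x) <= vnorm (Lx t x u) * dist3 t x u s y v.
  apply: Rmult_le_compat_l => //; exact: vnorm_ge0.
have a3 : vnorm (Lu t x u) * vnorm (vsub v u) <= vnorm (Lu t x u) * dist3 t x u s y v.
  apply: Rmult_le_compat_l => //; exact: vnorm_ge0.
have hD := sqrt_pos ((s - t) * (s - t) + dot (vsub y x) (vsub y x) + dot (vsub v u) (vsub v u)).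
rewrite -/(dist3 t x u s y v) in hD.
have key : Rabs (L s y v - L t x u) <= C * dist3 t x u s y v.
  set A := Lt t x u * (s - t) + dot (Lx t x u) (vsub y x) + dot (Lu t x u) (vsub v u).
  have e1 : L s y v - L t x u = (L s y v - L t x u - A) + (Lt t x u * (s - t)) + dot (Lx t x u) (vsub y x) + dot (Lu t x u) (vsub v u) by rewrite /A; ring.
  rewrite e1. 
  have t1 := Rabs_triang (L s y v - L t x u - A + Lt t x u * (s - t) + dot (Lx t x u) (vsub y x)) (dot (Lu t x u) (vsub v u)).
  have t2 := Rabs_triang (L s y v - L t x u - A + Lt t x u * (s - t)) (dot (Lx t x u) (vsub y x)).
  have t3 := Rabs_triang (L s y v - L t x u - A) (Lt t x u * (s - t)).
  have h9 : Rabs (L s y v - L t x u - A) <= 1 * dist3 t x u s y v by exact: h. rewrite /C. lra.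
have : C * dist3 t x u s y v < e.
  have := Rmult_lt_compat_l C _ _ hC hd2. have -> : C * (e / C) = e by field; lra. done.
lra.
Qed.

Lemma deriv_of_bound (f : R -> R) x l C : 0 <= C ->
  (forall eps, 0 < eps -> exists d, 0 < d /\ forall h, Rabs h < d ->
     Rabs (f (x + h) - f x - h * l) <= eps * (Rabs h * C)) ->
  derivable_pt_lim f x l.
Proof.
move=> hC H eps he.
have [d [hd Hd]] := H (eps / (C + 1)) ltac:(apply: Rdiv_lt_0_compat; lra).
exists (mkposreal d hd) => h hh /= hlt.
have hb := Hd h hlt.
have ha : 0 < Rabs h by apply: Rabs_pos_lt.
have -> : (f (x + h) - f x) / h - l = (f (x + h) - f x - h * l) / h by field.
rewrite /Rdiv Rabs_mult Rabs_inv.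
have hq : Rabs (f (x + h) - f x - h * l) * / Rabs h <= eps / (C + 1) * C.
  apply: (Rmult_le_reg_r (Rabs h)) => //. rewrite Rmult_assoc Rinv_l; last lra. lra.
apply: (Rle_lt_trans _ _ _ hq).
have e1 : eps / (C + 1) * C = eps * (C / (C + 1)) by field; lra.
rewrite e1.
have hh1 : C / (C + 1) < 1.
  apply: (Rmult_lt_reg_r (C + 1)); [lra|]. rewrite /Rdiv Rmult_assoc Rinv_l; lra.
have := Rmult_lt_compat_l eps _ _ he hh1. lra.
Qed.

Definition segt (t s l : R) := t + l * (s - t).
Definition segx n (y z : vec n) l : vec n := fun i => y i + l * (z i - y i).

Lemma in01_seg t s l : in01 t -> in01 s -> 0 <= l <= 1 -> in01 (segt t s l).
Proof. rewrite /in01 /segt => h1 h2 h3. split; nra. Qed.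

Lemma seg_vsub n (y z : vec n) l h : vsub (segx y z (l + h)) (segx y z l) = (fun i => h * vsub z y i).
Proof. apply: functional_extensionality => i; rewrite /vsub /segx; ring. Qed.

Lemma segt_sub t s l h : segt t s (l + h) - segt t s l = h * (s - t).
Proof. rewrite /segt; ring. Qed.

Lemma dot_scal_r k (a u : vec k) h : dot a (fun i => h * u i) = h * dot a u.
Proof. rewrite /dot -vsum_scal; apply: vsum_ext => i; ring. Qed.

Lemma dot_zero_r k (a : vec k) : dot a (vsub a a) = 0.
Proof. rewrite /dot /vsum big1 // => i _; rewrite /vsub; ring. Qed.

Lemma dot_vsub_same k (a w : vec k) : dot a (vsub w w) = 0.
Proof. rewrite /dot /vsum big1 // => i _; rewrite /vsub; ring. Qed.

Lemma sqrt_h2 h X : 0 <= X -> sqrt (h * h * X) = Rabs h * sqrt X.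
Proof. move=> hX. rewrite sqrt_mult; [|nra|done]. by rewrite -Rsqr_def sqrt_Rsqr_abs. Qed.

Lemma seg_dist3 n m t s (y z : vec n) (w : vec m) l h :
  dist3 (segt t s l) (segx y z l) w (segt t s (l + h)) (segx y z (l + h)) w = Rabs h * dist2 t y s z.
Proof.
rewrite /dist3 /dist2 segt_sub seg_vsub dot_vsub_same Rplus_0_r dot_scal_r.
rewrite (dot_sym _ (vsub z y)) dot_scal_r -sqrt_h2; last first.
  have := dot_ge0 (vsub z y). have := Rle_0_sqr (s - t). rewrite /Rsqr. lra.
congr sqrt. ring.
Qed.

Lemma seg_dist2 n t s (y z : vec n) l h :
  dist2 (segt t s l) (segx y z l) (segt t s (l + h)) (segx y z (l + h)) = Rabs h * dist2 t y s z.
Proof.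
rewrite /dist2 segt_sub seg_vsub dot_scal_r.
rewrite (dot_sym _ (vsub z y)) dot_scal_r -sqrt_h2; last first.
  have := dot_ge0 (vsub z y). have := Rle_0_sqr (s - t). rewrite /Rsqr. lra.
congr sqrt. ring.
Qed.

Lemma L_seg_deriv n m (L : R -> vec n -> vec m -> R) Lt Lx Lu
  (Hfr : forall t x u, in01 t -> L_frechet L Lt Lx Lu t x u)
  t s (y z : vec n) (w : vec m) l :
  in01 t -> in01 s -> 0 <= l <= 1 ->
  derivable_pt_lim (fun l => L (segt t s l) (segx y z l) w) l
    (Lt (segt t s l) (segx y z l) w * (s - t) + dot (Lx (segt t s l) (segx y z l) w) (vsub z y)).
Proof.
move=> ht hs hl.
apply: (deriv_of_bound (C := dist2 t y s z)); first exact: dist2_ge0.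
move=> eps he.
have [d [hd H]] := Hfr _ (segx y z l) w (in01_seg ht hs hl) eps he.
have hD := dist2_ge0 t y s z.
exists (d / (dist2 t y s z + 1)). split; first by apply: Rdiv_lt_0_compat; lra.
move=> h hh.
have hdist : dist3 (segt t s l) (segx y z l) w (segt t s (l + h)) (segx y z (l + h)) w < d.
  rewrite seg_dist3. have hh0 := Rabs_pos h.
  have : Rabs h * (dist2 t y s z + 1) < d.
    have := Rmult_lt_compat_r (dist2 t y s z + 1) _ _ ltac:(lra) hh.
    have -> : d / (dist2 t y s z + 1) * (dist2 t y s z + 1) = d by field; lra. done.
  nra.
have := H _ _ _ hdist. rewrite seg_dist3 segt_sub seg_vsub dot_vsub_same dot_scal_r.
have -> : L (segt t s (l + h)) (segx y z (l + h)) w - L (segt t s l) (segx y z l) w -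
   (Lt (segt t s l) (segx y z l) w * (h * (s - t)) + h * dot (Lx (segt t s l) (segx y z l) w) (vsub z y) + 0)
 = L (segt t s (l + h)) (segx y z (l + h)) w - L (segt t s l) (segx y z l) w -
   h * (Lt (segt t s l) (segx y z l) w * (s - t) + dot (Lx (segt t s l) (segx y z l) w) (vsub z y)) by ring.
done.
Qed.

Lemma segt0 t s : segt t s 0 = t. Proof. rewrite /segt; ring. Qed.
Lemma segt1 t s : segt t s 1 = s. Proof. rewrite /segt; ring. Qed.
Lemma segx0 n (y z : vec n) : segx y z 0 = y.
Proof. apply: functional_extensionality => i; rewrite /segx; ring. Qed.
Lemma segx1 n (y z : vec n) : segx y z 1 = z.
Proof. apply: functional_extensionality => i; rewrite /segx; ring. Qed.

Definition Gr n m (Lt : R -> vec n -> vec m -> R) (Lx : R -> vec n -> vec m -> vec n) t x u :=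
  sqrt (Lt t x u * Lt t x u + dot (Lx t x u) (Lx t x u)).

Lemma Gr_ge0 n m (Lt : R -> vec n -> vec m -> R) Lx t x u : 0 <= Gr Lt Lx t x u.
Proof. exact: sqrt_pos. Qed.

Lemma mvt_gen (f f' : R -> R) a b M :
  0 <= a <= 1 -> 0 <= b <= 1 ->
  (forall c, 0 <= c <= 1 -> derivable_pt_lim f c (f' c)) ->
  (forall c, 0 <= c <= 1 -> Rabs (f' c) <= M c) ->
  (forall c, 0 <= c <= 1 -> 0 <= M c) ->
  exists c, 0 <= c <= 1 /\ Rabs (f b - f a) <= M c * Rabs (b - a).
Proof.
move=> ha hb hd hM hM0.
destruct (Rtotal_order a b) as [hab|[hab|hab]].
- have [c [hc1 hc2]] := MVT_cor2 f f' a b hab (fun c hc => hd c ltac:(lra)).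
  exists c. split; first lra. rewrite hc1 Rabs_mult.
  apply: Rmult_le_compat_r; [exact: Rabs_pos|apply: hM; lra].
- subst. exists b. split => //. rewrite !Rminus_diag Rabs_R0 Rmult_0_r; lra.
- have [c [hc1 hc2]] := MVT_cor2 f f' b a hab (fun c hc => hd c ltac:(lra)).
  exists c. split; first lra. rewrite -Rabs_Ropp -(Rabs_Ropp (b - a)).
  have -> : - (f b - f a) = f a - f b by ring. have -> : - (b - a) = a - b by ring.
  rewrite hc1 Rabs_mult.
  apply: Rmult_le_compat_r; [exact: Rabs_pos|apply: hM; lra].
Qed.

Lemma L_seg_mvt n m (L : R -> vec n -> vec m -> R) Lt Lx Lu
  (Hfr : forall t x u, in01 t -> L_frechet L Lt Lx Lu t x u)
  t s (y z : vec n) (w : vec m) a b :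
  in01 t -> in01 s -> 0 <= a <= 1 -> 0 <= b <= 1 ->
  exists c, 0 <= c <= 1 /\
   Rabs (L (segt t s b) (segx y z b) w - L (segt t s a) (segx y z a) w)
    <= Gr Lt Lx (segt t s c) (segx y z c) w * dist2 t y s z * Rabs (b - a).
Proof.
move=> ht hs ha hb.
apply: (mvt_gen (f := fun l => L (segt t s l) (segx y z l) w)) => //.
- move=> c hc. exact: (L_seg_deriv Hfr y z w ht hs hc).
- move=> c hc. exact: CS2.
- move=> c hc. apply: Rmult_le_pos; [exact: Gr_ge0|exact: dist2_ge0].
Qed.

Lemma L_lip_seg n m (L : R -> vec n -> vec m -> R) Lt Lx Lu
  (Hfr : forall t x u, in01 t -> L_frechet L Lt Lx Lu t x u)
  t s (y z : vec n) (w : vec m) M :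
  in01 t -> in01 s ->
  (forall c, 0 <= c <= 1 -> Gr Lt Lx (segt t s c) (segx y z c) w <= M) ->
  Rabs (L s z w - L t y w) <= M * dist2 t y s z.
Proof.
move=> ht hs hM.
have [c [hc H]] := L_seg_mvt Hfr y z w ht hs (a := 0) (b := 1) ltac:(lra) ltac:(lra).
rewrite segt0 segt1 segx0 segx1 in H.
have e : Rabs (1 - 0) = 1 by rewrite Rminus_0_r Rabs_R1.
rewrite e Rmult_1_r in H. apply: (Rle_trans _ _ _ H).
apply: Rmult_le_compat_r; [exact: dist2_ge0|exact: hM].
Qed.

Lemma mulmv_msub n m (A B : mat n m) w i : mulmv (msub A B) w i = mulmv A w i - mulmv B w i.
Proof.
rewrite /mulmv /msub. have -> : vsum (fun j => A i j * w j) - vsum (fun j => B i j * w j)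
  = vsum (fun j => A i j * w j) + vsum (fun j => -1 * (B i j * w j)) by rewrite vsum_scal; ring.
rewrite -vsum_add; apply: vsum_ext => j; ring.
Qed.

Lemma Dg_scal n m (gt : R -> vec n -> mat n m) gx t x h a (v : vec n) i j :
  Dg gt gx t x (h * a) (fun k => h * v k) i j = h * Dg gt gx t x a v i j.
Proof.
rewrite /Dg. have -> : vsum (fun k => h * v k * gx t x k i j) = h * vsum (fun k => v k * gx t x k i j).
  rewrite -vsum_scal; apply: vsum_ext => k; ring.
ring.
Qed.

Lemma mulmv_scal n m (A : mat n m) h w i : mulmv (fun i j => h * A i j) w i = h * mulmv A w i.
Proof. rewrite /mulmv -vsum_scal; apply: vsum_ext => j; ring. Qed.

Lemma dot_lin3 k (e a b c : vec k) h :
  dot e a - dot e b - h * dot e c = dot e (fun i => a i - b i - h * c i).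
Proof.
rewrite /dot. rewrite -!vsum_scal.
have -> : vsum (fun i => e i * a i) - vsum (fun i => e i * b i) - vsum (fun i => h * (e i * c i))
  = vsum (fun i => e i * a i) + vsum (fun i => -1 * (e i * b i)) + vsum (fun i => -1 * (h * (e i * c i))).
  rewrite !vsum_scal; ring.
rewrite -!vsum_add; apply: vsum_ext => i; ring.
Qed.

Lemma g_seg_deriv n m (g : R -> vec n -> mat n m) gt gx
  (Hfr : forall t x, in01 t -> forall eps, 0 < eps -> exists d, 0 < d /\
     forall s y, dist2 t x s y < d ->
       mfrob (msub (msub (g s y) (g t x)) (Dg gt gx t x (s - t) (vsub y x)))
       <= eps * dist2 t x s y)
  t s (y z : vec n) (w : vec m) (e : vec n) l :
  in01 t -> in01 s -> 0 <= l <= 1 ->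
  derivable_pt_lim (fun l => dot e (mulmv (g (segt t s l) (segx y z l)) w)) l
    (dot e (mulmv (Dg gt gx (segt t s l) (segx y z l) (s - t) (vsub z y)) w)).
Proof.
move=> ht hs hl.
apply: (deriv_of_bound (C := vnorm e * vnorm w * dist2 t y s z)).
  apply: Rmult_le_pos; [apply: Rmult_le_pos; apply: vnorm_ge0|exact: dist2_ge0].
move=> eps he.
have [d [hd H]] := Hfr _ (segx y z l) (in01_seg ht hs hl) eps he.
have hD := dist2_ge0 t y s z.
exists (d / (dist2 t y s z + 1)). split; first by apply: Rdiv_lt_0_compat; lra.
move=> h hh.
have hdist : dist2 (segt t s l) (segx y z l) (segt t s (l + h)) (segx y z (l + h)) < d.
  rewrite seg_dist2. have hh0 := Rabs_pos h.
  have : Rabs h * (dist2 t y s z + 1) < d.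
    have := Rmult_lt_compat_r (dist2 t y s z + 1) _ _ ltac:(lra) hh.
    have -> : d / (dist2 t y s z + 1) * (dist2 t y s z + 1) = d by field; lra. done.
  nra.
have HM := H _ _ hdist. rewrite seg_dist2 segt_sub seg_vsub in HM.
pose p := segt t s l. pose px := segx y z l.
pose M := msub (msub (g (segt t s (l + h)) (segx y z (l + h))) (g p px))
               (Dg gt gx p px (h * (s - t)) (fun i : 'I_n => h * vsub z y i)).
have key : dot e (mulmv (g (segt t s (l + h)) (segx y z (l + h))) w) - dot e (mulmv (g p px) w)
   - h * dot e (mulmv (Dg gt gx p px (s - t) (vsub z y)) w) = dot e (mulmv M w).
  rewrite dot_lin3 /dot; apply: vsum_ext => i; congr (_ * _).
  rewrite /M !mulmv_msub.
  have -> : mulmv (Dg gt gx p px (h * (s - t)) (fun i0 => h * vsub z y i0)) w i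
          = mulmv (fun i j => h * Dg gt gx p px (s - t) (vsub z y) i j) w i.
    rewrite /mulmv; apply: vsum_ext => j; by rewrite Dg_scal.
  by rewrite mulmv_scal.
rewrite key.
apply: (Rle_trans _ _ _ (CS e (mulmv M w))).
have h1 := mulmv_frob M w.
have h2 := vnorm_ge0 e. have h3 := vnorm_ge0 w. have h4 := Rabs_pos h.
have h5 : vnorm (mulmv M w) <= eps * (Rabs h * dist2 t y s z) * vnorm w.
  apply: (Rle_trans _ _ _ h1). apply: Rmult_le_compat_r => //.
have h6 := Rmult_le_compat_l _ _ _ h2 h5.
apply: (Rle_trans _ _ _ h6). right; ring.
Qed.

Lemma g_lip n m (g : R -> vec n -> mat n m) gt gx (Hg : g_C1 g gt gx) cdg
  (HC4b : forall t x ht hx, in01 t ->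
     opnorm_le (Dg gt gx t x ht hx) (cdg * sqrt (ht * ht + dot hx hx)))
  t s (y z : vec n) (w : vec m) :
  in01 t -> in01 s -> 0 <= cdg ->
  vnorm (vsub (mulmv (g s z) w) (mulmv (g t y) w)) <= cdg * dist2 t y s z * vnorm w.
Proof.
move=> ht hs hcd.
set e := vsub (mulmv (g s z) w) (mulmv (g t y) w).
have hM : forall c, 0 <= c <= 1 -> Rabs (dot e (mulmv (Dg gt gx (segt t s c) (segx y z c) (s - t) (vsub z y)) w)) <= vnorm e * (cdg * dist2 t y s z * vnorm w).
  move=> c hc. apply: (Rle_trans _ _ _ (CS _ _)). apply: Rmult_le_compat_l; first exact: vnorm_ge0.
  exact: (HC4b _ _ (s - t) (vsub z y) (in01_seg ht hs hc)).
have hM0 : forall c, 0 <= c <= 1 -> 0 <= vnorm e * (cdg * dist2 t y s z * vnorm w).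
  move=> c hc. apply: Rmult_le_pos; first exact: vnorm_ge0.
  apply: Rmult_le_pos; [apply: Rmult_le_pos; [lra|exact: dist2_ge0]|exact: vnorm_ge0].
have [c [hc1 hc2]] := @mvt_gen (fun l => dot e (mulmv (g (segt t s l) (segx y z l)) w))
  (fun l => dot e (mulmv (Dg gt gx (segt t s l) (segx y z l) (s - t) (vsub z y)) w))
  0 1 (fun _ => vnorm e * (cdg * dist2 t y s z * vnorm w)) ltac:(lra) ltac:(lra)
  (fun c hc => g_seg_deriv Hg.1 y z w e ht hs hc) hM hM0.
simpl in hc2. rewrite segt0 segt1 segx0 segx1 in hc2.
  have E : dot e (mulmv (g s z) w) - dot e (mulmv (g t y) w) = dot e e.
    have -> : dot e (mulmv (g s z) w) - dot e (mulmv (g t y) w) = dot e (mulmv (g s z) w) + (-1) * dot e (mulmv (g t y) w) by ring.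
    rewrite /dot -vsum_scal -vsum_add; apply: vsum_ext => i; rewrite /e /vsub; ring.
  rewrite E Rminus_0_r Rabs_R1 Rmult_1_r in hc2.
  have hee : vnorm e * vnorm e <= vnorm e * (cdg * dist2 t y s z * vnorm w).
    rewrite vnorm_sq. apply: Rle_trans (Rle_abs _) hc2.
  have he0 := vnorm_ge0 e.
  destruct (Rle_lt_or_eq_dec 0 (vnorm e) he0) as [hp|hz].
  + apply: (Rmult_le_reg_l (vnorm e)) => //.
  + rewrite -hz. apply: Rmult_le_pos; [apply: Rmult_le_pos; [lra|exact: dist2_ge0]|exact: vnorm_ge0].
Qed.


Lemma Rdiv_le_0_compat a b : 0 <= a -> 0 < b -> 0 <= a / b.
Proof. move=> ha hb. apply: Rmult_le_pos => //. left; exact: Rinv_0_lt_compat. Qed.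

Lemma mulmv0 n m (A : mat n m) i : mulmv A (fun _ => 0) i = 0.
Proof. rewrite /mulmv /vsum big1 // => j _; ring. Qed.

Lemma G_zero n m (L : R -> vec n -> vec m -> R) g beta t y :
  Gset L g beta t y (0, fun _ => 0).
Proof.
exists (fun _ => 0), 0. split; first lra. split => /=; first (rewrite /Rdiv; ring).
move=> i; rewrite /Rdiv; ring.
Qed.

Lemma L_convex n m (L : R -> vec n -> vec m -> R) Lu mu t x
  (HC2 : forall u v, L t x u + dot (Lu t x u) (vsub v u) + mu / 2 * (vnorm (vsub v u) * vnorm (vsub v u))
     <= L t x v) (hmu : 0 < mu) (w1 w2 : vec m) a b :
  0 <= a -> 0 <= b -> a + b = 1 ->
  L t x (fun i => a * w1 i + b * w2 i) <= a * L t x w1 + b * L t x w2.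
Proof.
move=> ha hb hab.
set wc := fun i => a * w1 i + b * w2 i.
have h1 := HC2 wc w1. have h2 := HC2 wc w2.
have n1 : 0 <= mu / 2 * (vnorm (vsub w1 wc) * vnorm (vsub w1 wc)).
  apply: Rmult_le_pos; [lra|rewrite vnorm_sq; exact: dot_ge0].
have n2 : 0 <= mu / 2 * (vnorm (vsub w2 wc) * vnorm (vsub w2 wc)).
  apply: Rmult_le_pos; [lra|rewrite vnorm_sq; exact: dot_ge0].
have z : a * dot (Lu t x wc) (vsub w1 wc) + b * dot (Lu t x wc) (vsub w2 wc) = 0.
  rewrite /dot -!vsum_scal -vsum_add /vsum big1 // => i _. rewrite /vsub /wc.
  have hb' : b = 1 - a by lra. rewrite hb'. ring.
have h1' := Rmult_le_compat_l a _ _ ha h1. have h2' := Rmult_le_compat_l b _ _ hb h2.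
have n1' : 0 <= a * (mu / 2 * (vnorm (vsub w1 wc) * vnorm (vsub w1 wc))) by apply: Rmult_le_pos.
have n2' : 0 <= b * (mu / 2 * (vnorm (vsub w2 wc) * vnorm (vsub w2 wc))) by apply: Rmult_le_pos.
have e : L t x wc = (a + b) * L t x wc by rewrite hab; ring.
lra.
Qed.

Lemma G_convex n m (L : R -> vec n -> vec m -> R) g beta t y
  (hpos : forall w, 0 < L t y w + beta)
  (hconv : forall (w1 w2 : vec m) a b, 0 <= a -> 0 <= b -> a + b = 1 ->
     L t y (fun i => a * w1 i + b * w2 i) <= a * L t y w1 + b * L t y w2) :
  convex_set (Gset L g beta t y).
Proof.
move=> p q lam [w1 [r1 [hr1 [hp1 hp2]]]] [w2 [r2 [hr2 [hq1 hq2]]]] hlam.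
have hl1 := hpos w1. have hl2 := hpos w2.
set l1 := L t y w1 + beta in hl1 hp1 hp2. set l2 := L t y w2 + beta in hl2 hq1 hq2.
set al := lam * r1 / l1. set ga := (1 - lam) * r2 / l2.
have hal : 0 <= al by apply: Rdiv_le_0_compat; nra.
have hga : 0 <= ga by apply: Rdiv_le_0_compat; nra.
have E1 : lam * p.1 + (1 - lam) * q.1 = al + ga by rewrite hp1 hq1 /al /ga /Rdiv; ring.
have E2 : forall i, lam * p.2 i + (1 - lam) * q.2 i = al * mulmv (g t y) w1 i + ga * mulmv (g t y) w2 i.
  move=> i; rewrite hp2 hq2 /al /ga /Rdiv; ring.
destruct (Rle_lt_or_eq_dec 0 (al + ga) ltac:(lra)) as [hs|hs]; last first.
  have ha0 : al = 0 by lra. have hg0 : ga = 0 by lra.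
  exists (fun _ => 0), 0. split; first lra. split => /=.
    rewrite E1 -hs /Rdiv; ring.
  move=> i; rewrite E2 ha0 hg0 /Rdiv; ring.
set s := al + ga. have hs0 : 0 < s by exact: hs.
set a := al / s. set b := ga / s.
have ha : 0 <= a by apply: Rdiv_le_0_compat.
have hb : 0 <= b by apply: Rdiv_le_0_compat.
have hab : a + b = 1 by rewrite /a /b /s; field; lra.
set w := fun i => a * w1 i + b * w2 i.
have hw := hconv w1 w2 a b ha hb hab.
have hl := hpos w.
exists w, (s * (L t y w + beta)). split.
  split; first (apply: Rmult_le_pos; [lra| left; exact: hl]).
  have : s * L t y w <= al * L t y w1 + ga * L t y w2.
    have -> : al * L t y w1 + ga * L t y w2 = s * (a * L t y w1 + b * L t y w2) by rewrite /a /b; field; lra.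
    apply: Rmult_le_compat_l => //; lra.
  move=> h. have : al * l1 = lam * r1 by rewrite /al /Rdiv Rmult_assoc Rinv_l; lra.
  have : ga * l2 = (1 - lam) * r2 by rewrite /ga /Rdiv Rmult_assoc Rinv_l; lra.
  move=> e2 e1. rewrite /l1 Rmult_plus_distr_l in e1. rewrite /l2 Rmult_plus_distr_l in e2.
  have e3 : s * (L t y w + beta) = s * L t y w + al * beta + ga * beta by rewrite /s; ring.
  have h4 : lam * r1 + (1 - lam) * r2 <= 1 by nra.
  lra.
split => /=.
  rewrite E1 -/s. field; lra.
move=> i. rewrite E2 /w mulmv_lin.
have : s * (L t y (fun i0 => a * w1 i0 + b * w2 i0) + beta) *
   (a * mulmv (g t y) w1 i + b * mulmv (g t y) w2 i) / (L t y (fun i0 => a * w1 i0 + b * w2 i0) + beta)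
   = s * (a * mulmv (g t y) w1 i + b * mulmv (g t y) w2 i) by field; rewrite -/w; lra.
move=> ->. rewrite /a /b. field. lra.
Qed.

Lemma vnorm_comb k a b (u v : vec k) : vnorm (fun i => a * u i + b * v i) <= Rabs a * vnorm u + Rabs b * vnorm v.
Proof.
apply: Rle_trans (vnorm_add (fun i => a * u i) (fun i => b * v i)) _. rewrite !vnorm_scal. lra.
Qed.

Lemma kdiff be l l' r r' : 0 < be -> be <= l -> be <= l' -> 0 <= r <= 1 ->
  Rabs (r' / l' - r / l) <= Rabs (r' - r) / be + Rabs (l' - l) / (be * be).
Proof.
move=> hb hl hl' hr.
have e : r' / l' - r / l = (r' - r) * / l' + r * (l - l') * (/ l * / l') by field; lra.
rewrite e. apply: Rle_trans (Rabs_triang _ _) _.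
have q1 : Rabs l' = l' by apply: Rabs_pos_eq; lra.
have q2 : Rabs l = l by apply: Rabs_pos_eq; lra.
have q3 : Rabs r = r by apply: Rabs_pos_eq; lra.
rewrite !Rabs_mult (Rabs_inv l') (Rabs_inv l) q1 q2 q3.
have i1 : / l' <= / be by apply: Rinv_le_contravar.
have i2 : / l <= / be by apply: Rinv_le_contravar.
have i3 : 0 < / l' by apply: Rinv_0_lt_compat; lra.
have i4 : 0 < / l by apply: Rinv_0_lt_compat; lra.
have a1 := Rabs_pos (r' - r). have a2 := Rabs_pos (l - l').
have : / (be * be) = / be * / be by field; lra.
rewrite /Rdiv => ->.
have hib : 0 < / be by apply: Rinv_0_lt_compat.
have j1 : Rabs (r' - r) * / l' <= Rabs (r' - r) * / be by apply: Rmult_le_compat_l.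
have j2 : / l * / l' <= / be * / be by apply: Rmult_le_compat; lra.
have j3 : r * Rabs (l - l') * (/ l * / l') <= Rabs (l' - l) * (/ be * / be).
  rewrite (Rabs_minus_sym l' l).
  have : r * Rabs (l - l') <= Rabs (l - l') by nra.
  move=> h. apply: Rmult_le_compat => //; [nra|nra].
lra.
Qed.

Lemma dist3_same n m t (y : vec n) (u v : vec m) : dist3 t y u t y v = vnorm (vsub v u).
Proof.
rewrite /dist3 /vnorm. congr sqrt.
have -> : dot (vsub y y) (vsub y y) = 0 by rewrite /dot /vsum big1 // => i _; rewrite /vsub; ring.
ring.
Qed.

Definition Phi n m (L : R -> vec n -> vec m -> R) (g : R -> vec n -> mat n m) beta t y
  (x : R * vec m) : pt n :=
  (x.1 / (L t y x.2 + beta), fun i => x.1 * mulmv (g t y) x.2 i / (L t y x.2 + beta)).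

Lemma Phi_cont n m (L : R -> vec n -> vec m -> R) Lt Lx Lu g beta t y cg
  (hb : 0 < beta) (hcg : 0 < cg)
  (hpos : forall w, beta <= L t y w + beta)
  (hfr : forall w, L_frechet L Lt Lx Lu t y w)
  (hg : opnorm_le (g t y) cg) (x : R * vec m) :
  0 <= x.1 <= 1 -> forall e, 0 < e -> exists del, 0 < del /\
    forall x', pd Rd (@vd m) x x' < del -> pdist (Phi L g beta t y x) (Phi L g beta t y x') < e.
Proof.
case: x => r w /= hr e he.
set C := 1 + cg * (vnorm w + 1).
have hC : 1 <= C by have := vnorm_ge0 w; rewrite /C; nra.
set A := C * (/ beta + / (beta * beta)) + cg / beta.
have hib : 0 < / beta by apply: Rinv_0_lt_compat.
have hib2 : 0 < / (beta * beta) by apply: Rinv_0_lt_compat; nra.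
have hA : 0 <= A by rewrite /A /Rdiv; nra.
set eta := e / (A + 1).
have heta : 0 < eta by apply: Rdiv_lt_0_compat; lra.
have [dL [hdL HL]] := L_cont (hfr w) heta.
exists (Rmin 1 (Rmin eta dL)). split.
  apply: Rmin_pos; [lra|apply: Rmin_pos; lra].
case=> r' w' /=. rewrite /pd /Rd /vd /= => hd.
have m1 := Rmin_l 1 (Rmin eta dL). have m2 := Rmin_r 1 (Rmin eta dL).
have m3 := Rmin_l eta dL. have m4 := Rmin_r eta dL.
have hr0 := Rabs_pos (r' - r). have hw0 := vnorm_ge0 (vsub w' w).
have dr : Rabs (r' - r) < eta by lra.
have dw : vnorm (vsub w' w) < eta by lra.
have dw1 : vnorm (vsub w' w) < 1 by lra.
have dLw : Rabs (L t y w' - L t y w) < eta.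
  apply: HL. rewrite dist3_same. lra.
set k := r / (L t y w + beta). set k' := r' / (L t y w' + beta).
have hk := @kdiff beta _ _ r r' hb (hpos w) (hpos w') hr.
have hk' : Rabs (k' - k) <= eta * (/ beta + / (beta * beta)).
  rewrite /k /k'. apply: Rle_trans hk _.
  have e1 : L t y w' + beta - (L t y w + beta) = L t y w' - L t y w by ring.
  rewrite e1 /Rdiv. nra.
have hk0 : Rabs k <= / beta.
  rewrite /k /Rdiv Rabs_mult Rabs_inv !Rabs_pos_eq; try lra.
  have := Rinv_le_contravar _ _ hb (hpos w). have := hpos w. nra.
  have := hpos w; lra.
rewrite /pdist /Phi /=.
apply: Rle_lt_trans (dist2_le _ _ _ _) _.
set G := mulmv (g t y) w. set G' := mulmv (g t y) w'.
have eV : vsub (fun i => r' * G' i / (L t y w' + beta)) (fun i => r * G i / (L t y w + beta))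
   = (fun i => (k' - k) * G' i + k * vsub G' G i).
  apply: functional_extensionality => i; rewrite /vsub /k /k' /Rdiv; ring.
rewrite eV -/k -/k'.
have hG' : vnorm G' <= cg * (vnorm w + 1).
  apply: Rle_trans (hg w') _. apply: Rmult_le_compat_l; first lra.
  have := vnorm_add w (vsub w' w).
  have -> : (fun i => w i + vsub w' w i) = w' by apply: functional_extensionality => i; rewrite /vsub; ring.
  lra.
have hGG : vnorm (vsub G' G) <= cg * vnorm (vsub w' w).
  have -> : vsub G' G = mulmv (g t y) (vsub w' w).
    apply: functional_extensionality => i. rewrite /G /G' /vsub /mulmv.
    have -> : vsum (fun j => g t y i j * w' j) - vsum (fun j => g t y i j * w j)
       = vsum (fun j => g t y i j * w' j) + vsum (fun j => -1 * (g t y i j * w j)) by rewrite vsum_scal; ring.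
    rewrite -vsum_add; apply: vsum_ext => j; ring.
  exact: hg.
have hc := vnorm_comb (k' - k) k G' (vsub G' G).
have hG0 := vnorm_ge0 G'. have hGG0 := vnorm_ge0 (vsub G' G).
have hk1 := Rabs_pos (k' - k). have hk2 := Rabs_pos k.
have b1 : Rabs (k' - k) * vnorm G' <= eta * (/ beta + / (beta * beta)) * (cg * (vnorm w + 1)).
  apply: Rmult_le_compat => //.
have b2 : Rabs k * vnorm (vsub G' G) <= / beta * (cg * eta).
  apply: Rmult_le_compat => //. apply: Rle_trans hGG _. apply: Rmult_le_compat_l; lra.
have fin : eta * A < e.
  rewrite /eta. have -> : e / (A + 1) * A = e * (A / (A + 1)) by field; lra.
  have : A / (A + 1) < 1.
    apply: (Rmult_lt_reg_r (A + 1)); [lra|]. rewrite /Rdiv Rmult_assoc Rinv_l; lra.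
  move=> h; have := Rmult_lt_compat_l e _ _ he h. lra.
have : eta * A = eta * (/ beta + / (beta * beta)) + eta * (/ beta + / (beta * beta)) * (cg * (vnorm w + 1)) + / beta * (cg * eta).
  rewrite /A /C /Rdiv; ring.
lra.
Qed.

Lemma Phi_in n m (L : R -> vec n -> vec m -> R) g beta t y x :
  0 <= x.1 <= 1 -> Gset L g beta t y (Phi L g beta t y x).
Proof. case: x => r w /= hr. exists w, r. split => //. Qed.

Lemma G_compact n m (L : R -> vec n -> vec m -> R) Lt Lx Lu g beta t y cg theta r0
  (hb : 0 < beta) (hcg : 0 < cg)
  (hpos : forall w, beta <= L t y w + beta)
  (hfr : forall w, L_frechet L Lt Lx Lu t y w)
  (hg : opnorm_le (g t y) cg)
  (hth : forall w, L t y w >= theta (vnorm w))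
  (HC1b : forall r, 0 <= r -> theta r > 0)
  (HC1c : forall eps, 0 < eps -> exists R0, forall r, r >= R0 -> Rabs (r / theta r) < eps)
  (hr0 : 0 < r0) (Hr0th : forall r, r >= r0 -> theta r >= r) :
  compact_set (Gset L g beta t y).
Proof.
move=> I U HU Hc.
have [i0 hi0] := Hc _ (G_zero L g beta t y).
have [e0 [he0 H0]] := HU i0 _ hi0.
have [R0 HR0] := HC1c (e0 / (2 * cg)) ltac:(apply: Rdiv_lt_0_compat; lra).
set W := Rmax (Rmax R0 r0) (2 / e0).
have hW1 : R0 <= W by apply: Rle_trans (Rmax_l _ _) (Rmax_l _ _).
have hW2 : r0 <= W by apply: Rle_trans (Rmax_r _ _) (Rmax_l _ _).
have hW3 : 2 / e0 <= W by apply: Rmax_r.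
have far : forall r w, 0 <= r <= 1 -> W < vnorm w -> U i0 (Phi L g beta t y (r, w)).
  move=> r w hr hw. apply: H0. rewrite /pdist /Phi /=.
  apply: Rle_lt_trans (dist2_le _ _ _ _) _.
  set l := L t y w + beta.
  have th1 := hth w. have th2 := Hr0th (vnorm w) ltac:(lra).
  have th0 : 0 < theta (vnorm w) by apply: HC1b; exact: vnorm_ge0.
  have hl : theta (vnorm w) <= l by rewrite /l; lra.
  have hl0 : 0 < l by lra.
  have hk : Rabs (r / l - 0) <= / l.
    rewrite Rminus_0_r /Rdiv Rabs_mult Rabs_inv !Rabs_pos_eq; try lra.
    have := Rinv_0_lt_compat _ hl0. nra.
  have ev : vsub (fun i => r * mulmv (g t y) w i / l) (fun _ => 0) = (fun i => (r / l) * mulmv (g t y) w i).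
    apply: functional_extensionality => i; rewrite /vsub /Rdiv; ring.
  rewrite ev vnorm_scal.
  have hk' : Rabs (r / l) <= / l by rewrite -(Rminus_0_r (r / l)).
  have hgw := hg w. have hgw0 := vnorm_ge0 (mulmv (g t y) w).
  have hR := HR0 (vnorm w) ltac:(lra).
  have hw0 := vnorm_ge0 w.
  rewrite Rabs_pos_eq in hR; last by apply: Rdiv_le_0_compat => //; lra.
  have i1 : / l <= / theta (vnorm w) by apply: Rinv_le_contravar.
  have i2 : / theta (vnorm w) <= / vnorm w by apply: Rinv_le_contravar; lra.
  have i3 : / vnorm w < e0 / 2.
    have hwpos : 0 < vnorm w by lra.
    have : 2 / e0 < vnorm w by lra.
    move=> h. apply: (Rmult_lt_reg_l (vnorm w)) => //. rewrite Rinv_r; last lra.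
    have : vnorm w * (e0 / 2) = (vnorm w) * e0 / 2 by field. move=> ->.
    have : 2 / e0 * e0 < vnorm w * e0 by apply: Rmult_lt_compat_r.
    have -> : 2 / e0 * e0 = 2 by field; lra. lra.
  have i4 : cg * vnorm w * / theta (vnorm w) < e0 / 2.
    have : vnorm w / theta (vnorm w) < e0 / (2 * cg) by [].
    move=> h. have := Rmult_lt_compat_l cg _ _ hcg h.
    have -> : cg * (e0 / (2 * cg)) = e0 / 2 by field; lra.
    rewrite /Rdiv; lra.
  have i5 : Rabs (r / l) * vnorm (mulmv (g t y) w) <= / l * (cg * vnorm w).
    apply: Rmult_le_compat => //; exact: Rabs_pos.
  have i6 : / l * (cg * vnorm w) <= / theta (vnorm w) * (cg * vnorm w).
    apply: Rmult_le_compat_r => //; nra.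
  lra.
pose K := fun x : R * vec m => 0 <= x.1 <= 1 /\ cube W x.2.
have cK : cpt (pd Rd (@vd m)) K.
  apply: (@cpt_pd _ _ Rd (@vd m) (fun r => 0 <= r <= 1) (cube W)).
  exact: Rd_tri. exact: vd_tri. exact: Rd_refl. exact: vd_refl. exact: cpt_interval. exact: cpt_cube.
pose K' := fun p => exists x, K x /\ Phi L g beta t y x = p.
have cK' : cpt (@pdist n) K'.
  apply: (@cpt_image _ _ (pd Rd (@vd m)) (@pdist n) K K' (Phi L g beta t y)).
  - apply: pd_tri; [exact: Rd_tri|exact: vd_tri].
  - apply: pd_refl; [exact: Rd_refl|exact: vd_refl].
  - exact: cK.
  - move=> x [hx _] e he. exact: (Phi_cont hb hcg hpos hfr hg hx he).
  - move=> x hx. by exists x.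
  - done.
have cov' : forall p, K' p -> exists i, U i p.
  move=> p [x [hx <-]]. apply: Hc. exact: Phi_in hx.1.
have [l hl] := cK' _ U HU cov'.
exists (i0 :: l) => p hp.
have ep : forall w r, Gset L g beta t y p -> p.1 = r / (L t y w + beta) ->
   (forall i, p.2 i = r * mulmv (g t y) w i / (L t y w + beta)) -> p = Phi L g beta t y (r, w).
  move=> w r _ h1 h2. rewrite (surjective_pairing p) /Phi /= h1. congr pair.
  by apply: functional_extensionality.
case: (hp) => w [r [hr [h1 h2]]].
have hpe := ep w r hp h1 h2.
destruct (classic (cube W w)) as [hc|hc].
- have [i [hi1 hi2]] := hl p (ex_intro _ (r, w) (conj (conj hr hc) (esym hpe))).
  exists i; split => //; right => //.
- exists i0; split; first by left.
  rewrite hpe. apply: far => //.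
  have [j hj] := not_all_ex_not _ _ hc.
  have := vnorm_coord w j. lra.
Qed.


Lemma bound_L0 n m (L : R -> vec n -> vec m -> R) Lt Lx Lu Bx
  (Hfr : forall t x u, in01 t -> L_frechet L Lt Lx Lu t x u) :
  exists M0, forall t x, in01 t -> cube Bx x -> L t x (fun _ => 0) <= M0.
Proof.
have cK : cpt (pd Rd (@vd n)) (fun p : R * vec n => 0 <= p.1 <= 1 /\ cube Bx p.2).
  apply: (@cpt_pd _ _ Rd (@vd n) (fun r => 0 <= r <= 1) (cube Bx)).
  exact: Rd_tri. exact: vd_tri. exact: Rd_refl. exact: vd_refl. exact: cpt_interval. exact: cpt_cube.
have hc : forall p, (0 <= p.1 <= 1 /\ cube Bx p.2) -> forall e, 0 < e -> exists del, 0 < del /\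
    forall p', True -> pd Rd (@vd n) p p' < del -> Rabs (L p'.1 p'.2 (fun _ => 0) - L p.1 p.2 (fun _ => 0)) < e.
  case=> t x [ht hx] e he /=.
  have [d [hd Hd]] := L_cont (Hfr t x (fun _ => 0) ht) he.
  exists d; split => // [[s y]] _ /=; rewrite /pd /Rd /vd /= => h.
  apply: Hd. apply: Rle_lt_trans (dist3_le _ _ _ _ _ _) _.
  have -> : vnorm (vsub (fun _ : 'I_m => 0) (fun _ => 0)) = 0.
    rewrite -(vnorm_zero m); apply: vnorm_ext => i; rewrite /vsub; ring.
  lra.
have [M HM] := @cpt_bound _ (pd Rd (@vd n)) _ (fun _ => True) (fun p => L p.1 p.2 (fun _ => 0))
  (pd_tri Rd_tri (@vd_tri n)) (pd_refl Rd_refl (@vd_refl n)) cK (fun _ _ => I) hc.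
exists M => t x ht hx. exact: (HM (t, x) (conj ht hx)).
Qed.

Lemma bound_grad n m (Lt : R -> vec n -> vec m -> R) Lx Bx Bw
  (HLt : cont3R Lt) (HLx : cont3 Lx) :
  exists M1, 0 <= M1 /\ forall t x u, in01 t -> cube Bx x -> cube Bw u -> Gr Lt Lx t x u <= M1.
Proof.
pose K := fun p : (R * vec n) * vec m => (0 <= p.1.1 <= 1 /\ cube Bx p.1.2) /\ cube Bw p.2.
have cK : cpt (pd (pd Rd (@vd n)) (@vd m)) K.
  apply: (@cpt_pd _ _ (pd Rd (@vd n)) (@vd m) (fun p => 0 <= p.1 <= 1 /\ cube Bx p.2) (cube Bw)).
  - apply: pd_tri; [exact: Rd_tri|exact: vd_tri].
  - exact: vd_tri.
  - apply: pd_refl; [exact: Rd_refl|exact: vd_refl].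
  - exact: vd_refl.
  - apply: (@cpt_pd _ _ Rd (@vd n) (fun r => 0 <= r <= 1) (cube Bx)).
    exact: Rd_tri. exact: vd_tri. exact: Rd_refl. exact: vd_refl. exact: cpt_interval. exact: cpt_cube.
  - exact: cpt_cube.
have hc : forall p, K p -> forall e, 0 < e -> exists del, 0 < del /\
    forall p', in01 p'.1.1 -> pd (pd Rd (@vd n)) (@vd m) p p' < del ->
    Rabs (Rabs (Lt p'.1.1 p'.1.2 p'.2) + vnorm (Lx p'.1.1 p'.1.2 p'.2) - (Rabs (Lt p.1.1 p.1.2 p.2) + vnorm (Lx p.1.1 p.1.2 p.2))) < e.
case=> [[t x] u] [[ht hx] hu] e he /=.
  have [d1 [hd1 H1]] := HLt t x u ht (e / 2) ltac:(lra).
  have [d2 [hd2 H2]] := HLx t x u ht (e / 2) ltac:(lra).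
  exists (Rmin d1 d2). split; first by apply: Rmin_pos.
  case=> [[s y] v] /= hs. rewrite /pd /Rd /vd /= => h.
  have hdist : dist3 t x u s y v < Rmin d1 d2.
    apply: Rle_lt_trans (dist3_le _ _ _ _ _ _) _. lra.
  have := Rmin_l d1 d2. have := Rmin_r d1 d2. move=> m2 m1.
  have a1 := H1 s y v hs ltac:(lra). have a2 := H2 s y v hs ltac:(lra).
  have a3 := Rabs_triang_inv (Lt s y v) (Lt t x u).
  have a4 := Rabs_triang_inv (Lt t x u) (Lt s y v).
  have a5 := vnorm_rev (Lx s y v) (Lx t x u).
  rewrite (Rabs_minus_sym (Lt t x u)) in a4.
  apply: Rabs_def1.
  + have := Rle_abs (vnorm (Lx s y v) - vnorm (Lx t x u)). lra.
  + have := Rle_abs (- (vnorm (Lx s y v) - vnorm (Lx t x u))). rewrite Rabs_Ropp. lra.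
have [M HM] := @cpt_bound _ (pd (pd Rd (@vd n)) (@vd m)) K (fun p => in01 p.1.1)
  (fun p => Rabs (Lt p.1.1 p.1.2 p.2) + vnorm (Lx p.1.1 p.1.2 p.2))
  (pd_tri (pd_tri Rd_tri (@vd_tri n)) (@vd_tri m)) (pd_refl (pd_refl Rd_refl (@vd_refl n)) (@vd_refl m)) cK
  (fun p hp => hp.1.1) hc.
exists (Rabs M). split; first exact: Rabs_pos.
  move=> t x u ht hx hu. have := HM ((t, x), u) (conj (conj ht hx) hu). simpl.
  move=> h. rewrite /Gr.
  have h1 := @sqrt_sum_le (Lt t x u * Lt t x u) (dot (Lx t x u) (Lx t x u)) ltac:(nra) (dot_ge0 _).
  have h2 : sqrt (Lt t x u * Lt t x u) = Rabs (Lt t x u) by rewrite -Rsqr_def sqrt_Rsqr_abs. rewrite h2 in h1. rewrite /vnorm in h. have hM := Rle_abs M. lra.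
Qed.


Lemma pdist_le n (a b : pt n) : pdist a b <= Rabs (b.1 - a.1) + vnorm (vsub b.2 a.2).
Proof. exact: dist2_le. Qed.

Lemma inOmega_seg n cg c t (y : vec n) s z l :
  inOmega cg c t y -> inOmega cg c s z -> 0 <= l <= 1 -> inOmega cg c (segt t s l) (segx y z l).
Proof.
move=> [ht hy] [hs hz] hl. split; first exact: in01_seg.
have -> : segx y z l = (fun i => (1 - l) * y i + l * z i).
  apply: functional_extensionality => i; rewrite /segx; ring.
apply: Rle_trans (vnorm_comb _ _ _ _) _.
rewrite !Rabs_pos_eq; try lra. nra.
Qed.

Lemma vnorm_cube n (x : vec n) B : vnorm x <= B -> cube B x.
Proof. move=> h i. exact: Rle_trans (vnorm_coord x i) h. Qed.

Lemma dist2_seg0 n t s (y z : vec n) c : 0 <= c <= 1 ->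
  dist2 t y (segt t s c) (segx y z c) = c * dist2 t y s z.
Proof.
move=> hc. have := seg_dist2 t s y z 0 c. rewrite segt0 segx0 Rplus_0_l Rabs_pos_eq //; lra.
Qed.

Definition Cw beta r0 := r0 / beta + 1.
Definition Xi beta xi delta := xi + delta / beta.
Definition Aa beta xi cdg := 2 * cdg + 4 * xi / beta + 1.
Definition K1 beta cdg r0 := cdg * Cw beta r0.
Definition K2 beta cdg cg M1 W := M1 / (beta * beta) * (1 + cg * W) + cdg * W / beta.
Definition K4 beta xi delta cdg r0 := 8 * Xi beta xi delta / beta + 8 * cdg * Xi beta xi delta / beta + cdg * Cw beta r0.
Definition Kc beta xi delta cdg cg r0 M1 W :=
  K1 beta cdg r0 + K2 beta cdg cg M1 W + Aa beta xi cdg + K4 beta xi delta cdg r0.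

Lemma Kc_ge beta xi delta cdg cg r0 M1 W :
  0 < beta -> 0 < xi -> 0 < delta -> 0 < cdg -> 0 < cg -> 0 < r0 -> 0 <= M1 -> 0 <= W ->
  0 <= K1 beta cdg r0 /\ 0 <= K2 beta cdg cg M1 W /\ 0 <= Aa beta xi cdg /\ 0 <= K4 beta xi delta cdg r0.
Proof.
move=> hb hxi hd hcdg hcg hr0 hM1 hW.
have ib : 0 < / beta by apply: Rinv_0_lt_compat.
have ib2 : 0 < / (beta * beta) by apply: Rinv_0_lt_compat; nra.
have hCw : 0 <= Cw beta r0 by rewrite /Cw /Rdiv; nra.
have hXi : 0 <= Xi beta xi delta by rewrite /Xi /Rdiv; nra.
have p1 : 0 <= Xi beta xi delta * / beta by nra.
have p2 : 0 <= cdg * Xi beta xi delta * / beta by apply: Rmult_le_pos; nra.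
have p3 : 0 <= M1 * / (beta * beta) * (1 + cg * W) by apply: Rmult_le_pos; nra.
have p4 : 0 <= cdg * W * / beta by apply: Rmult_le_pos; nra.
rewrite /K1 /K2 /Aa /K4 /Rdiv. split; first nra. split; first nra. split; nra.
Qed.


Lemma hd_one n m (L : R -> vec n -> vec m -> R) Lt Lx Lu (g : R -> vec n -> mat n m) gt gx
  beta xi delta cg cdg r0 c M0 M1 W
  (hb : 0 < beta) (hxi : 0 < xi) (hdl : 0 < delta) (hcg : 0 < cg) (hcdg : 0 < cdg) (hr0 : 0 < r0)
  (Hfr : forall t x u, in01 t -> L_frechet L Lt Lx Lu t x u)
  (Hg : g_C1 g gt gx)
  (HC4a : forall t x, in01 t -> opnorm_le (g t x) cg)
  (HC4b : forall t x ht hx, in01 t ->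
     opnorm_le (Dg gt gx t x ht hx) (cdg * sqrt (ht * ht + dot hx hx)))
  (HC3 : forall t x u, in01 t ->
     sqrt (Lt t x u * Lt t x u + dot (Lx t x u) (Lx t x u)) * vnorm (mulmv (g t x) u)
     <= xi * L t x u + delta)
  (Lpos : forall t x u, in01 t -> 0 < L t x u)
  (Lbig : forall t x u, in01 t -> r0 <= vnorm u -> vnorm u <= L t x u)
  (hM0 : forall t x, inOmega cg c t x -> L t x (fun _ => 0) <= M0)
  (hM1 : forall t x u, inOmega cg c t x -> vnorm u <= W -> Gr Lt Lx t x u <= M1)
  (hM1p : 0 <= M1) (hW1 : r0 <= W) (hW2 : 2 * M0 + beta <= W)
  (Gcv : forall s z, in01 s -> convex_set (Gset L g beta s z))
  t y s z a :
  inOmega cg c t y -> inOmega cg c s z -> Gset L g beta t y a ->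
  exists b, Gset L g beta s z b /\ pdist a b <= Kc beta xi delta cdg cg r0 M1 W * dist2 t y s z.
Proof.
move=> hty hsz [w [rho [hrho [ha1 ha2]]]].
have ht := hty.1. have hs := hsz.1.
have hD := dist2_ge0 t y s z.
set D := dist2 t y s z in hD *.
have [k1p [k2p [k3p k4p]]] := @Kc_ge beta xi delta cdg cg r0 M1 W hb hxi hdl hcdg hcg hr0 hM1p ltac:(lra).
have hKc : forall X, X <= K1 beta cdg r0 * D \/ X <= K2 beta cdg cg M1 W * D \/
                     X <= Aa beta xi cdg * D \/ X <= K4 beta xi delta cdg r0 * D ->
                     X <= Kc beta xi delta cdg cg r0 M1 W * D.
  move=> X HX. rewrite /Kc.
  have q1 := Rmult_le_pos _ _ k1p hD. have q2 := Rmult_le_pos _ _ k2p hD.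
  have q3 := Rmult_le_pos _ _ k3p hD. have q4 := Rmult_le_pos _ _ k4p hD.
  have e : (K1 beta cdg r0 + K2 beta cdg cg M1 W + Aa beta xi cdg + K4 beta xi delta cdg r0) * D
    = K1 beta cdg r0 * D + K2 beta cdg cg M1 W * D + Aa beta xi cdg * D + K4 beta xi delta cdg r0 * D by ring.
  rewrite e. lra.
have hL1 := Lpos t y w ht. have hL2 := Lpos s z w hs.
set L1 := L t y w in hL1 ha1 ha2 *. set L2 := L s z w in hL2 *.
set G1 := mulmv (g t y) w in ha2 *. set G2 := mulmv (g s z) w.
have hE : vnorm (vsub G2 G1) <= cdg * D * vnorm w.
  exact: (g_lip Hg HC4b y z w ht hs ltac:(lra)).
have hw0 := vnorm_ge0 w.
have hwC : vnorm w <= Cw beta r0 * (L1 + beta).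
  rewrite /Cw. have ib : 0 < / beta by apply: Rinv_0_lt_compat.
  have e : (r0 / beta + 1) * (L1 + beta) = r0 * / beta * L1 + r0 + L1 + beta by field; lra.
  rewrite e. have hh : 0 <= r0 * / beta * L1 by apply: Rmult_le_pos; nra.
  destruct (Rle_or_lt r0 (vnorm w)) as [h|h].
  - have := Lbig t y w ht h. rewrite -/L1. move=> h2. lra.
  - lra.
set k1 := rho / (L1 + beta).
have ek1 : k1 * (L1 + beta) = rho by rewrite /k1; field; lra.
have hk1 : 0 <= k1 by apply: Rdiv_le_0_compat; lra.
have hE0 := vnorm_ge0 (vsub G2 G1).
have hCw : 0 <= Cw beta r0.
  rewrite /Cw. have hh : 0 <= r0 / beta by apply: Rdiv_le_0_compat; lra. lra.
have term2 : k1 * vnorm (vsub G2 G1) <= cdg * Cw beta r0 * D.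
  have e1 : k1 * vnorm (vsub G2 G1) <= k1 * (cdg * D * vnorm w) by apply: Rmult_le_compat_l.
  have e2 : k1 * (cdg * D * vnorm w) <= k1 * (cdg * D * (Cw beta r0 * (L1 + beta))).
    apply: Rmult_le_compat_l => //. apply: Rmult_le_compat_l => //. nra.
  have e3 : k1 * (cdg * D * (Cw beta r0 * (L1 + beta))) = rho * (cdg * D * Cw beta r0).
    rewrite -ek1; ring.
  have e4 : rho * (cdg * D * Cw beta r0) <= cdg * Cw beta r0 * D.
    have : 0 <= cdg * D * Cw beta r0 by apply: Rmult_le_pos; nra.
    nra.
  lra.
destruct (Rle_or_lt (rho * (L2 + beta)) (L1 + beta)) as [hA|hB].
- exists (k1, fun i => rho * G2 i / (L1 + beta)). split.
    exists w, (rho * (L2 + beta) / (L1 + beta)). split.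
      split; first (apply: Rdiv_le_0_compat; nra).
      apply: (Rmult_le_reg_r (L1 + beta)); [lra|]. rewrite /Rdiv Rmult_assoc Rinv_l; lra.
    split => /=. rewrite /k1 -/L2. field; lra.
    move=> i. rewrite -/L2 -/G2. field; lra.
  apply: Rle_trans (pdist_le _ _) _. rewrite /= ha1 -/k1 Rminus_diag Rabs_R0 Rplus_0_l.
  have -> : vsub (fun i => rho * G2 i / (L1 + beta)) a.2 = (fun i => k1 * vsub G2 G1 i).
    apply: functional_extensionality => i. rewrite /vsub ha2 /k1. field; lra.
  rewrite vnorm_scal Rabs_pos_eq //. apply: hKc. left. rewrite /K1. lra.
have hrho0 : 0 < rho by nra.
have hL12 : L1 < L2 by nra.
have hG1 : vnorm G1 <= cg * vnorm w by exact: (HC4a t y ht w).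
set i1 := / (L1 + beta). set i2 := / (L2 + beta).
have hi1 : 0 < i1 by apply: Rinv_0_lt_compat; lra.
have hi2 : 0 < i2 by apply: Rinv_0_lt_compat; lra.
have ib : 0 < / beta by apply: Rinv_0_lt_compat.
have hi1b : i1 <= / beta by apply: Rinv_le_contravar; lra.
have hi2b : i2 <= / beta by apply: Rinv_le_contravar; lra.
have ei1 : i1 * (L1 + beta) = 1 by rewrite /i1 Rinv_l; lra.
have ei2 : i2 * (L2 + beta) = 1 by rewrite /i2 Rinv_l; lra.
have ek1' : k1 = rho * i1 by rewrite /k1.
have di : i1 - i2 = (L2 - L1) * i1 * i2 by rewrite /i1 /i2; field; lra.
destruct (Rle_or_lt (vnorm w) W) as [hwW|hwW].
- have hDel : Rabs (L2 - L1) <= M1 * D.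
    apply: (@L_lip_seg _ _ _ _ _ _ Hfr t s y z w M1 ht hs) => cc hcc. apply: hM1 => //. exact: inOmega_seg.
  rewrite Rabs_pos_eq in hDel; last lra.
  exists (rho * i2, fun i => rho * G2 i * i2). split.
    exists w, rho. split => //.
  apply: Rle_trans (pdist_le _ _) _. rewrite /= ha1 -/k1 ek1'.
  have -> : vsub (fun i => rho * G2 i * i2) a.2 = (fun i => (- (rho * (i1 - i2))) * G1 i + (rho * i2) * vsub G2 G1 i).
    apply: functional_extensionality => i. rewrite /vsub ha2 /i1. field; lra.
  apply: hKc. right; left.
  have hX : 0 <= rho * (i1 - i2) by rewrite di; apply: Rmult_le_pos; [lra|]; apply: Rmult_le_pos; [|lra]; apply: Rmult_le_pos; lra.
  have hX2 : rho * (i1 - i2) <= M1 * D * (/ beta * / beta).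
    rewrite di.
    have s1 : (L2 - L1) * i1 <= M1 * D * / beta by apply: Rmult_le_compat; lra.
    have s2 : (L2 - L1) * i1 * i2 <= M1 * D * / beta * / beta by apply: Rmult_le_compat => //; nra.
    have s3 : 0 <= (L2 - L1) * i1 * i2 by apply: Rmult_le_pos; [|lra]; apply: Rmult_le_pos; lra.
    nra.
  have hv := vnorm_comb (- (rho * (i1 - i2))) (rho * i2) G1 (vsub G2 G1).
  rewrite Rabs_Ropp !(Rabs_pos_eq (rho * _)) in hv; [|nra|lra].
  have t1 : rho * i2 * vnorm (vsub G2 G1) <= / beta * (cdg * D * W).
    apply: Rmult_le_compat; [nra|lra|nra|]. apply: Rle_trans hE _. apply: Rmult_le_compat_l; [nra|lra].
  have t2 : rho * (i1 - i2) * vnorm G1 <= M1 * D * (/ beta * / beta) * (cg * W).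
    apply: Rmult_le_compat => //; [exact: vnorm_ge0|]. apply: Rle_trans hG1 _. nra.
  have t3 : Rabs (rho * i2 - rho * i1) <= M1 * D * (/ beta * / beta).
    have -> : rho * i2 - rho * i1 = - (rho * (i1 - i2)) by ring.
    rewrite Rabs_Ropp Rabs_pos_eq //.
  have eK : K2 beta cdg cg M1 W * D = M1 * D * (/ beta * / beta) + M1 * D * (/ beta * / beta) * (cg * W) + / beta * (cdg * D * W).
    rewrite /K2 /Rdiv Rinv_mult. ring.
  lra.
have hwL1 : vnorm w <= L1 by apply: Lbig => //; lra.
have hwL2 : vnorm w <= L2 by apply: Lbig => //; lra.
have hL0 := Lpos s z (fun _ => 0) hs.
have hL0M := hM0 s z hsz.
set L0 := L s z (fun _ => 0) in hL0 hL0M *.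
set gam := vnorm G1.
have egam : gam = vnorm G1 by [].
have hgam0 : 0 <= gam by exact: vnorm_ge0.
have hAa : 1 <= Aa beta xi cdg.
  rewrite /Aa. have : 0 <= 4 * xi / beta by apply: Rdiv_le_0_compat; lra. lra.
destruct (Rle_or_lt gam (Aa beta xi cdg * D * (L1 + beta))) as [hga|hgb].
- exists (k1, fun i => k1 * (L0 + beta) * mulmv (g s z) (fun _ => 0) i / (L0 + beta)). split.
    exists (fun _ => 0), (k1 * (L0 + beta)). split.
      split; first nra.
      have hL01 : L0 <= L1 by lra.
      have : k1 * (L0 + beta) <= k1 * (L1 + beta) by apply: Rmult_le_compat_l => //; lra.
      lra.
    split => /=; first (rewrite -/L0; field; lra). move=> i. rewrite -/L0 //.
  apply: Rle_trans (pdist_le _ _) _. rewrite /= ha1 -/k1 Rminus_diag Rabs_R0 Rplus_0_l.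
  have -> : vsub (fun i => k1 * (L0 + beta) * mulmv (g s z) (fun _ => 0) i / (L0 + beta)) a.2
      = (fun i => (- k1) * G1 i).
    apply: functional_extensionality => i. rewrite /vsub ha2 mulmv0 /k1. field; lra.
  rewrite vnorm_scal Rabs_Ropp Rabs_pos_eq // -/gam. apply: hKc. right; right; left.
  have : k1 * gam <= k1 * (Aa beta xi cdg * D * (L1 + beta)) by apply: Rmult_le_compat_l.
  have : k1 * (Aa beta xi cdg * D * (L1 + beta)) = rho * (Aa beta xi cdg * D) by rewrite -ek1; ring.
  have : 0 <= Aa beta xi cdg * D by apply: Rmult_le_pos; lra.
  nra.
have hD0 : 0 <= D := hD.
have hAcdg : 2 * cdg <= Aa beta xi cdg.
  rewrite /Aa. have : 0 <= 4 * xi / beta by apply: Rdiv_le_0_compat; lra. lra.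
have hA4 : 4 * xi * D <= gam.
  have h1 : 4 * xi / beta <= Aa beta xi cdg by rewrite /Aa; lra.
  have h2 : 4 * xi / beta * D * (L1 + beta) <= Aa beta xi cdg * D * (L1 + beta).
    apply: Rmult_le_compat_r; [lra|]. apply: Rmult_le_compat_r => //.
  have h3 : 4 * xi / beta * D * (L1 + beta) = 4 * xi * D + 4 * xi * D * L1 * / beta.
    field; lra.
  have h4 : 0 <= 4 * xi * D * L1 * / beta.
    apply: Rmult_le_pos; [|lra]. apply: Rmult_le_pos; [|lra]. nra.
  lra.
have hcdgL : 2 * (cdg * D * L1) < gam.
  have : 2 * cdg * D * (L1 + beta) <= Aa beta xi cdg * D * (L1 + beta).
    apply: Rmult_le_compat_r; [lra|]. apply: Rmult_le_compat_r => //.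
  have : 0 <= cdg * D * beta by apply: Rmult_le_pos; [nra|lra].
  lra.
pose phi := fun l => L (segt t s l) (segx y z l) w.
have phi0 : phi 0 = L1 by rewrite /phi segt0 segx0.
have phi1 : phi 1 = L2 by rewrite /phi segt1 segx1.
have Gbound : forall cc, 0 <= cc <= 1 ->
    Gr Lt Lx (segt t s cc) (segx y z cc) w * (gam / 2) <= xi * phi cc + delta.
  move=> cc hcc.
  have hin := in01_seg ht hs hcc.
  have hl := g_lip Hg HC4b y (segx y z cc) w ht hin ltac:(lra).
  rewrite dist2_seg0 // in hl.
  have hr := vnorm_rev (mulmv (g (segt t s cc) (segx y z cc)) w) G1.
  have hb1 : cdg * (cc * D) * vnorm w <= cdg * D * L1.
    have : cc * D <= D by nra.
    move=> h. have : cdg * (cc * D) <= cdg * D by apply: Rmult_le_compat_l; lra.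
    move=> h'. apply: Rmult_le_compat => //; try nra.
  have hgp : gam / 2 <= vnorm (mulmv (g (segt t s cc) (segx y z cc)) w).
    have := Rle_abs (vnorm (mulmv (g (segt t s cc) (segx y z cc)) w) - vnorm G1).
    have := Rabs_Ropp (vnorm (mulmv (g (segt t s cc) (segx y z cc)) w) - vnorm G1).
    have := Rle_abs (- (vnorm (mulmv (g (segt t s cc) (segx y z cc)) w) - vnorm G1)).
    move=> q1 q2 q3. rewrite -/G1 -/D in hl. lra.
  have h3 := HC3 _ (segx y z cc) w hin.
  have hg0 := Gr_ge0 Lt Lx (segt t s cc) (segx y z cc) w.
  have : Gr Lt Lx (segt t s cc) (segx y z cc) w * (gam / 2) <=
         Gr Lt Lx (segt t s cc) (segx y z cc) w * vnorm (mulmv (g (segt t s cc) (segx y z cc)) w).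
    by apply: Rmult_le_compat_l.
  rewrite /Gr /phi. lra.
have phicont : forall cc, 0 <= cc <= 1 -> continuity_pt phi cc.
  move=> cc hcc. apply: derivable_continuous_pt.
  exact: (exist _ _ (L_seg_deriv Hfr y z w ht hs hcc)).
have [cm [hcm1 hcm2]] := continuity_ab_maj phi 0 1 ltac:(lra) phicont.
set Mx := phi cm in hcm1.
have hMx0 : L1 <= Mx by rewrite -phi0; apply: hcm1; lra.
have [c1 [hc1 hmv1]] := @L_seg_mvt _ _ _ _ _ _ Hfr t s y z w 0 cm ht hs ltac:(lra) hcm2.
rewrite segt0 segx0 -/L1 Rminus_0_r in hmv1.
change (L (segt t s cm) (segx y z cm) w) with Mx in hmv1.
rewrite -/D in hmv1.
have hgam : 0 < gam.
  have hh : 0 <= Aa beta xi cdg * D * (L1 + beta) by apply: Rmult_le_pos; [apply: Rmult_le_pos|]; lra.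
  lra.
have hMxb : xi * Mx <= 2 * xi * L1 + delta.
  have hg1 := Gbound c1 hc1.
  have hp1 : phi c1 <= Mx := hcm1 c1 hc1.
  set Gr1 := Gr Lt Lx (segt t s c1) (segx y z c1) w in hg1 hmv1.
  have hGr1 : 0 <= Gr1 := Gr_ge0 _ _ _ _ _.
  have hcm : Rabs cm <= 1 by rewrite Rabs_pos_eq; lra.
  have f0 : Mx - L1 <= Gr1 * D.
    have := Rle_abs (Mx - L1). have : Gr1 * D * Rabs cm <= Gr1 * D * 1.
      apply: Rmult_le_compat_l => //; nra.
    lra.
  have f1 : (Mx - L1) * gam <= 2 * D * (xi * Mx + delta).
    have : (Mx - L1) * gam <= Gr1 * D * gam by apply: Rmult_le_compat_r; lra.
    have : Gr1 * (gam / 2) <= xi * Mx + delta by nra.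
    nra.
  have f2 : 2 * D * xi * Mx <= Mx * gam / 2 by nra.
  have f3 : 4 * xi * D * delta <= gam * delta by nra.
  have f4 : xi * Mx * gam <= (2 * xi * L1 + delta) * gam by nra.
  apply: (Rmult_le_reg_r gam) => //.
have [c2 [hc2 hmv2]] := @L_seg_mvt _ _ _ _ _ _ Hfr t s y z w 0 1 ht hs ltac:(lra) ltac:(lra).
rewrite segt0 segx0 segt1 segx1 -/L1 -/L2 -/D Rminus_0_r Rabs_R1 Rmult_1_r in hmv2.
have hDg : (L2 - L1) * gam <= 4 * (xi * L1 + delta) * D.
  have hg2 := Gbound c2 hc2.
  have hp2 : phi c2 <= Mx := hcm1 c2 hc2.
  set Gr2 := Gr Lt Lx (segt t s c2) (segx y z c2) w in hg2 hmv2.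
  have hGr2 : 0 <= Gr2 := Gr_ge0 _ _ _ _ _.
  have f0 : L2 - L1 <= Gr2 * D by have := Rle_abs (L2 - L1); lra.
  have : (L2 - L1) * gam <= Gr2 * D * gam by apply: Rmult_le_compat_r; lra.
  have : Gr2 * (gam / 2) <= 2 * xi * L1 + 2 * delta by nra.
  nra.
have hDpos : 0 < D.
  destruct (Rle_lt_or_eq_dec 0 D hD) as [h|h] => //.
  rewrite -h in hDg. nra.
have hXi : xi * L1 + delta <= Xi beta xi delta * (L1 + beta).
  rewrite /Xi. have e : (xi + delta / beta) * (L1 + beta) = xi * L1 + xi * beta + delta * L1 / beta + delta by field; lra.
  rewrite e. have : 0 <= delta * L1 / beta by apply: Rdiv_le_0_compat; nra.
  nra.
have hXi0 : 0 <= Xi beta xi delta.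
  rewrite /Xi. have hh : 0 <= delta / beta by apply: Rdiv_le_0_compat; lra. lra.
have hDel4 : L2 - L1 <= 4 * Xi beta xi delta.
  have h1 : (L2 - L1) * (Aa beta xi cdg * D * (L1 + beta)) <= (L2 - L1) * gam.
    apply: Rmult_le_compat_l; lra.
  have h2 : (L2 - L1) * Aa beta xi cdg * (D * (L1 + beta)) <= 4 * Xi beta xi delta * (D * (L1 + beta)).
    have : 4 * (xi * L1 + delta) * D <= 4 * (Xi beta xi delta * (L1 + beta)) * D by nra.
    nra.
  have h3 : (L2 - L1) * Aa beta xi cdg <= 4 * Xi beta xi delta.
    apply: (Rmult_le_reg_r (D * (L1 + beta))); [nra|lra].
  nra.
set i0 := / (L0 + beta).
have hi0 : 0 < i0 by apply: Rinv_0_lt_compat; lra.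
have hM0W : M0 <= W by lra.
have hL01 : L0 <= L1 by lra.
have hi1i0 : i1 <= i0 by apply: Rinv_le_contravar; lra.
have hk1i0 : k1 <= i0 by rewrite ek1'; nra.
have hi2k1 : i2 < k1.
  have h := Rmult_lt_compat_r (i1 * i2) _ _ ltac:(nra) hB.
  have e1 : rho * (L2 + beta) * (i1 * i2) = rho * i1 by rewrite /i1 /i2; field; lra.
  have e2 : (L1 + beta) * (i1 * i2) = i2 by rewrite /i1 /i2; field; lra.
  rewrite ek1'; lra.
have h2i2 : 2 * i2 <= i0.
  have h : / (L2 + beta) <= / (2 * (L0 + beta)) by apply: Rinv_le_contravar; lra.
  have e : / (2 * (L0 + beta)) = i0 / 2 by rewrite /i0; field; lra.
  rewrite -/i2 e in h. lra.
set th := (i0 - k1) / (i0 - i2).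
have hth0 : 0 <= th by apply: Rdiv_le_0_compat; lra.
have hth1 : th <= 1.
  apply: (Rmult_le_reg_r (i0 - i2)); [lra|]. rewrite /th /Rdiv Rmult_assoc Rinv_l; lra.
have eth : th * i2 + (1 - th) * i0 = k1 by rewrite /th; field; lra.
pose Q : pt n := (1 / (L2 + beta), fun i => 1 * G2 i / (L2 + beta)).
pose Ax : pt n := (1 / (L0 + beta), fun i => 1 * mulmv (g s z) (fun _ => 0) i / (L0 + beta)).
have hQ : Gset L g beta s z Q by exists w, 1; split; [lra|split => //].
have hAx : Gset L g beta s z Ax by exists (fun _ => 0), 1; split; [lra|split => //].
have hbG := Gcv s z hs Q Ax th hQ hAx (conj hth0 hth1).
eexists. split; first exact: hbG.
apply: Rle_trans (pdist_le _ _) _.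
have eb1 : th * Q.1 + (1 - th) * Ax.1 = k1.
  rewrite /Q /Ax /= -eth /i2 /i0 /Rdiv; ring.
rewrite /= eb1 ha1 -/k1 Rminus_diag Rabs_R0 Rplus_0_l.
have -> : vsub (fun i => th * Q.2 i + (1 - th) * Ax.2 i) a.2
    = (fun i => (th * i2 - k1) * G2 i + k1 * vsub G2 G1 i).
  apply: functional_extensionality => i. rewrite /vsub ha2 /Q /Ax /= mulmv0 /k1 /i2. field; lra.
apply: Rle_trans (vnorm_comb _ _ _ _) _.
have eabs : Rabs (th * i2 - k1) = (1 - th) * i0.
  have hp : 0 <= (1 - th) * i0 by apply: Rmult_le_pos; lra.
  rewrite Rabs_minus_sym Rabs_pos_eq; lra.
rewrite eabs Rabs_pos_eq //.
apply: hKc. right; right; right.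
have hX0 : 0 <= L2 - L1 by lra.
have t1 : (1 - th) * i0 <= 2 * ((L2 - L1) * i1 * i2).
  have e : (1 - th) * i0 * (i0 - i2) = (k1 - i2) * i0 by rewrite /th; field; lra.
  have h1 : (1 - th) * i0 * (i0 - i2) <= 2 * (k1 - i2) * (i0 - i2) by rewrite e; nra.
  have h2 : (1 - th) * i0 <= 2 * (k1 - i2) by apply: (Rmult_le_reg_r (i0 - i2)); lra.
  have h3 : k1 - i2 <= i1 - i2 by rewrite ek1'; nra.
  rewrite -di. lra.
have hG2 : vnorm G2 <= gam + cdg * D * L1.
  have h := vnorm_add G1 (vsub G2 G1).
  have e : (fun i => G1 i + vsub G2 G1 i) = G2 by apply: functional_extensionality => i; rewrite /vsub; ring.
  rewrite e in h. have : cdg * D * vnorm w <= cdg * D * L1 by apply: Rmult_le_compat_l; nra.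
  lra.
have hG20 := vnorm_ge0 G2.
set X := L2 - L1 in hX0 t1 hDg hDel4.
have p1 : X * gam * i1 * i2 <= 4 * Xi beta xi delta * D * / beta.
  have a1 : X * gam <= 4 * Xi beta xi delta * (L1 + beta) * D by nra.
  have a2 : X * gam * i1 <= 4 * Xi beta xi delta * D.
    have := Rmult_le_compat_r i1 _ _ ltac:(lra) a1.
    have -> : 4 * Xi beta xi delta * (L1 + beta) * D * i1 = 4 * Xi beta xi delta * D by rewrite /i1; field; lra.
    done.
  have a3 := Rmult_le_compat_r i2 _ _ ltac:(lra) a2.
  have a4 : 4 * Xi beta xi delta * D * i2 <= 4 * Xi beta xi delta * D * / beta.
    apply: Rmult_le_compat_l => //; nra.
  lra.
have p2 : X * (cdg * D * L1) * i1 * i2 <= 4 * Xi beta xi delta * cdg * D * / beta.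
  have b1 : L1 * i1 <= 1 by nra.
  have b2 : X * (cdg * D * L1) * i1 = X * cdg * D * (L1 * i1) by ring.
  have b3 : X * cdg * D * (L1 * i1) <= X * cdg * D.
    have hh : 0 <= X * cdg * D by apply: Rmult_le_pos; [nra|lra].
    have := Rmult_le_compat_l _ _ _ hh b1. lra.
  have b4 : X * cdg * D <= 4 * Xi beta xi delta * cdg * D.
    apply: Rmult_le_compat_r => //. apply: Rmult_le_compat_r; lra.
  have b5 : X * (cdg * D * L1) * i1 <= 4 * Xi beta xi delta * cdg * D by lra.
  have b6 := Rmult_le_compat_r i2 _ _ ltac:(lra) b5.
  have b7 : 4 * Xi beta xi delta * cdg * D * i2 <= 4 * Xi beta xi delta * cdg * D * / beta.
    apply: Rmult_le_compat_l => //. apply: Rmult_le_pos; [|lra]. nra.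
  lra.
have t2 : (1 - th) * i0 * vnorm G2 <= 2 * (X * i1 * i2) * (gam + cdg * D * L1).
  apply: Rmult_le_compat => //; nra.
have eK : K4 beta xi delta cdg r0 * D = 2 * (4 * Xi beta xi delta * D * / beta + 4 * Xi beta xi delta * cdg * D * / beta) + cdg * Cw beta r0 * D.
  rewrite /K4 /Rdiv. ring.
have e3 : 2 * (X * i1 * i2) * (gam + cdg * D * L1) = 2 * (X * gam * i1 * i2 + X * (cdg * D * L1) * i1 * i2) by ring.
lra.
Qed.




Unset Implicit Arguments.

Theorem lemma1
  (n m : nat) (Hn : (0 < n)%N) (Hm : (0 < m)%N)
  (L : R -> vec n -> vec m -> R)
  (Lt : R -> vec n -> vec m -> R) (Lx : R -> vec n -> vec m -> vec n)
  (Lu : R -> vec n -> vec m -> vec m)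
  (HL : L_C1 L Lt Lx Lu)
  (g : R -> vec n -> mat n m)
  (gt : R -> vec n -> mat n m) (gx : R -> vec n -> 'I_n -> mat n m)
  (Hg : g_C1 g gt gx)
  (* (C1) *)
  (theta : R -> R)
  (HC1a : forall t x u, in01 t -> L t x u >= theta (vnorm u))
  (HC1b : forall r, 0 <= r -> theta r > 0)
  (HC1c : forall eps, 0 < eps -> exists R0, forall r, r >= R0 -> Rabs (r / theta r) < eps)
  (* (C2) *)
  (mu : R) (Hmu : mu > 0)
  (HC2 : forall t x u v, in01 t ->
     L t x u + dot (Lu t x u) (vsub v u) + mu / 2 * (vnorm (vsub v u) * vnorm (vsub v u))
     <= L t x v)
  (* (C3) *)
  (xi delta : R) (Hxi : xi > 0) (Hdelta : delta > 0)
  (HC3 : forall t x u, in01 t ->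
     sqrt (Lt t x u * Lt t x u + dot (Lx t x u) (Lx t x u)) * vnorm (mulmv (g t x) u)
     <= xi * L t x u + delta)
  (* (C4) *)
  (cg cdg : R) (Hcg : cg > 0) (Hcdg : cdg > 0)
  (HC4a : forall t x, in01 t -> opnorm_le (g t x) cg)
  (HC4b : forall t x ht hx, in01 t ->
     opnorm_le (Dg gt gx t x ht hx) (cdg * sqrt (ht * ht + dot hx hx)))
  (* constants *)
  (r0 : R) (Hr0 : r0 > 0) (Hr0th : forall r, r >= r0 -> theta r >= r)
  (HLint : Riemann_integrable (fun t => L t (@vzero n) (@vzero m)) 0 1)
  (c : R) (Hc : c = r0 + RiemannInt HLint)
  (T0 : R) (HT0 : 0 < T0 < 1)
  (beta : R)
  (Hbeta_max :
     (exists t x u, in01 t /\ vnorm x <= cg * c /\ vnorm u <= (c + 1) / T0 /\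
        dot (Lu t x u) u - L t x u = beta) /\
     (forall t x u, in01 t -> vnorm x <= cg * c -> vnorm u <= (c + 1) / T0 ->
        dot (Lu t x u) u - L t x u <= beta))
  (Hbeta : beta > delta / xi) :
  (forall t y, in01 t ->
     nonempty_set (Gset L g beta t y) /\
     convex_set (Gset L g beta t y) /\
     compact_set (Gset L g beta t y)) /\
  (exists K, 0 <= K /\
     forall t y s z, inOmega cg c t y -> inOmega cg c s z ->
       hausdorff_le (Gset L g beta t y) (Gset L g beta s z) (K * dist2 t y s z)).

Proof.
have hdx : 0 < delta / xi by apply: Rdiv_lt_0_compat; lra.
have hb : 0 < beta by lra.
have Lpos : forall t x u, in01 t -> 0 < L t x u.
  move=> t x u ht. have h1 := HC1a t x u ht. have h2 := HC1b (vnorm u) (vnorm_ge0 u). lra.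
have Lbig : forall t x u, in01 t -> r0 <= vnorm u -> vnorm u <= L t x u.
  move=> t x u ht hu. have h1 := HC1a t x u ht. have h2 := Hr0th (vnorm u) ltac:(lra). lra.
have Hfr := HL.1.
have Gcv : forall t y, in01 t -> convex_set (Gset L g beta t y).
  move=> t y ht. apply: G_convex.
  - move=> w. have := Lpos t y w ht. lra.
  - move=> w1 w2 a b ha hb' hab. apply: (@L_convex n m L Lu mu t y) => //.
    move=> u v. exact: HC2 t y u v ht.
split.
  move=> t y ht. split; first by exists (0, fun _ => 0); exact: G_zero.
  split; first exact: Gcv.
  apply: (@G_compact n m L Lt Lx Lu g beta t y cg theta r0) => //.
  - move=> w. have := Lpos t y w ht. lra.
  - move=> w. exact: Hfr t y w ht.
  - exact: HC4a t y ht.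
  - move=> w. exact: HC1a t y w ht.
have [M0 hM0] := @bound_L0 n m L Lt Lx Lu (cg * c) Hfr.
have hM0' : forall t x, inOmega cg c t x -> L t x (fun _ => 0) <= M0.
  move=> t x [ht hx]. apply: hM0 => //. exact: vnorm_cube.
set W := r0 + 2 * Rabs M0 + beta + 1.
have hW1 : r0 <= W by have := Rabs_pos M0; rewrite /W; lra.
have hW2 : 2 * M0 + beta <= W by have := Rle_abs M0; have := Rabs_pos M0; rewrite /W; lra.
have hW0 : 0 <= W by lra.
have [M1 [hM1p hM1]] := @bound_grad n m Lt Lx (cg * c) W HL.2.1 HL.2.2.1.
have hM1' : forall t x u, inOmega cg c t x -> vnorm u <= W -> Gr Lt Lx t x u <= M1.
  move=> t x u [ht hx] hu. apply: hM1 => //; exact: vnorm_cube.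
have [k1 [k2 [k3 k4]]] := @Kc_ge beta xi delta cdg cg r0 M1 W hb Hxi Hdelta Hcdg Hcg Hr0 hM1p hW0.
exists (Kc beta xi delta cdg cg r0 M1 W). split.
  rewrite /Kc. lra.
move=> t y s z hty hsz. split.
- move=> a ha eps he.
  have [b [hb1 hb2]] := @hd_one n m L Lt Lx Lu g gt gx beta xi delta cg cdg r0 c M0 M1 W
    hb Hxi Hdelta Hcg Hcdg Hr0 Hfr Hg HC4a HC4b HC3 Lpos Lbig hM0' hM1' hM1p hW1 hW2 Gcv t y s z a hty hsz ha.
  exists b. split => //. lra.
- move=> b hbG eps he.
  have [a [ha1 ha2]] := @hd_one n m L Lt Lx Lu g gt gx beta xi delta cg cdg r0 c M0 M1 W
    hb Hxi Hdelta Hcg Hcdg Hr0 Hfr Hg HC4a HC4b HC3 Lpos Lbig hM0' hM1' hM1p hW1 hW2 Gcv s z t y b hsz hty hbG.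
  exists a. split => //.
  have e1 : pdist a b = pdist b a by rewrite /pdist dist2_sym.
  rewrite e1. rewrite (dist2_sym s z t y) in ha2. lra.
Qed.
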